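(* There is a sequence of embeddings $\mathcal{K}_1 \hookrightarrow \mathcal{K}_2^{\mathrm{eff}} \hookrightarrow \mathcal{B}^{\mathrm{eff}} \hookrightarrow \mathcal{E}$.
   Context: A pca is a set with a partial binary application operation containing distinct $\mathrm{s},\mathrm{k}$ with $\mathrm{k}ab\downarrow=a$, $\mathrm{s}ab\downarrow$, $\mathrm{s}abc\simeq(ac)(bc)$. An embedding of pcas is an injective map $f$ with: if $ab$ is defined then $f(a)f(b)$ is defined and equals $f(ab)$. $\mathcal{K}_1$: $\omega$ with $n\cdot m=\varphi_n(m)$. For partial functions $\varphi,\psi:\omega\rightharpoonup\omega$ let $\varphi\cdot\psi$ be the partial function $n\mapsto\Phi^{\varphi\oplus\psi}_{\varphi(0)}(n)$, where $\Phi_e$ is the $e$-th Turing functional, $(\varphi\oplus\psi)(2n)\simeq\varphi(n)$, $(\varphi\oplus\psi)(2n+1)\simeq\psi(n)$, and querying the oracle at an undefined point diverges. $\mathcal{K}_2^{\mathrm{eff}}$: total computable functions with this application, defined iff the result is total. $\mathcal{B}^{\mathrm{eff}}$: partial computable functions with this application. $\mathcal{E}$: the c.e. subsets of $\omega$ with application $A\cdot B=\{n:\exists u\,(\langle n,u\rangle\in A\wedge D_u\subseteq B)\}$, where $\langle\cdot,\cdot\rangle$ is a bijective computable pairing with $\langle 0,0\rangle=0$ and $D_u$ is the finite set with canonical code $u$. *)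

(* Defs.v *)
(* Partial functions omega -> omega are [nat -> option nat]. *)
From Stdlib Require Import Arith List.
Import ListNotations.

Definition cpair (x y : nat) : nat := (x + y) * (x + y + 1) / 2 + y.

(** Canonical finite sets: D_u = { i | bit i of u is 1 }. *)
Definition inD (i u : nat) : Prop := Nat.testbit u i = true.

Inductive code : Type :=
| CZero
| CSucc
| CProj (i : nat)
| CComp (f : code) (gs : list code)
| CRec (f g : code)
| CMu (f : code)
| COrc.

Inductive eval (O : nat -> option nat) : code -> list nat -> nat -> Prop :=
| eZero v : eval O CZero v 0
| eSucc v : eval O CSucc v (S (nth 0 v 0))
| eProj i v : eval O (CProj i) v (nth i v 0)
| eComp f gs v ws y :
    evals O gs v ws -> eval O f ws y -> eval O (CComp f gs) v y
| eRec0 f g v y : eval O f v y -> eval O (CRec f g) (0 :: v) y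
| eRecS f g k v z y :
    eval O (CRec f g) (k :: v) z -> eval O g (k :: z :: v) y ->
    eval O (CRec f g) (S k :: v) y
| eMu f v k :
    eval O f (k :: v) 0 ->
    (forall j, j < k -> exists z, z <> 0 /\ eval O f (j :: v) z) ->
    eval O (CMu f) v k
| eOrc v y : O (nth 0 v 0) = Some y -> eval O COrc v y
with evals (O : nat -> option nat) : list code -> list nat -> list nat -> Prop :=
| esNil v : evals O [] v []
| esCons g gs v w ws : eval O g v w -> evals O gs v ws -> evals O (g :: gs) v (w :: ws).

Fixpoint encode (c : code) : nat :=
  match c with
  | CZero => cpair 0 0
  | CSucc => cpair 1 0
  | CProj i => cpair 2 i
  | CComp f gs =>
      cpair 3 (cpair (encode f)
        ((fix el (l : list code) : nat :=
            match l with [] => 0 | g :: l' => S (cpair (encode g) (el l')) end) gs))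
  | CRec f g => cpair 4 (cpair (encode f) (encode g))
  | CMu f => cpair 5 (encode f)
  | COrc => cpair 6 0
  end.

(** [Phi e O n y] : Phi^O_e(n) converges with value y  (the e-th Turing functional;
    indices that code no program give the nowhere-defined functional). *)
Definition Phi (e : nat) (O : nat -> option nat) (n y : nat) : Prop :=
  exists c, encode c = e /\ eval O c [n] y.

Definition empty_oracle : nat -> option nat := fun _ => None.
Definition phi (e n y : nat) : Prop := Phi e empty_oracle n y.

Definition join (f g : nat -> option nat) : nat -> option nat :=
  fun x => if Nat.odd x then g (Nat.div2 x) else f (Nat.div2 x).

(** [Bapp f g n y] : (f . g)(n) converges to y, i.e. Phi^{f (+) g}_{f(0)}(n) = y
    (diverges when f(0) is undefined). *)
Definition Bapp (f g : nat -> option nat) (n y : nat) : Prop :=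
  exists e, f 0 = Some e /\ Phi e (join f g) n y.

Definition K1 : Type := nat.
Definition K1_app (a b c : K1) : Prop := phi a b c.

Definition total_computable (f : nat -> nat) : Prop :=
  exists e, forall n, phi e n (f n).
Definition K2eff : Type := { f : nat -> nat | total_computable f }.
Definition K2eff_app (a b c : K2eff) : Prop :=
  forall n, Bapp (fun x => Some (proj1_sig a x)) (fun x => Some (proj1_sig b x))
                 n (proj1_sig c n).

Definition partial_computable (f : nat -> option nat) : Prop :=
  exists e, forall n y, f n = Some y <-> phi e n y.
Definition Beff : Type := { f : nat -> option nat | partial_computable f }.
Definition Beff_app (a b c : Beff) : Prop :=
  forall n y, proj1_sig c n = Some y <-> Bapp (proj1_sig a) (proj1_sig b) n y.

Definition ce (A : nat -> Prop) : Prop :=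
  exists e, forall n, A n <-> exists y, phi e n y.
Definition Ecarrier : Type := { A : nat -> Prop | ce A }.
Definition E_app (a b c : Ecarrier) : Prop :=
  forall n, proj1_sig c n <->
    exists u, proj1_sig a (cpair n u) /\ (forall i, inD i u -> proj1_sig b i).

Definition embedding {A B : Type} (appA : A -> A -> A -> Prop)
    (appB : B -> B -> B -> Prop) (f : A -> B) : Prop :=
  (forall a a', f a = f a' -> a = a') /\
  (forall a b c, appA a b c -> appB (f a) (f b) (f c)).

(* Main.v *)
Require Import Defs.
From Stdlib Require Import Arith Lia List PeanoNat Classical ClassicalEpsilon FunctionalExtensionality ProofIrrelevance.
Import ListNotations.

Arguments cpair : simpl never.
Definition T (s : nat) := s * (s + 1) / 2.

Lemma T_S s : T (S s) = T s + S s.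
Proof.
  unfold T. replace (S s * (S s + 1)) with (s * (s+1) + (S s) * 2) by lia.
  rewrite Nat.div_add by lia. lia.
Qed.

Lemma T_mono s t : s <= t -> T s <= T t.
Proof. induction 1; auto. rewrite T_S. lia. Qed.

Lemma T_ge s : s <= T s.
Proof. induction s; [simpl; lia| rewrite T_S; lia]. Qed.

Lemma cpair_T x y : cpair x y = T (x + y) + y.
Proof. reflexivity. Qed.

Lemma cpair_bounds x y : T (x+y) <= cpair x y < T (S (x+y)).
Proof. rewrite cpair_T, T_S. lia. Qed.

Lemma T_sandwich s t z : T s <= z < T (S s) -> T t <= z < T (S t) -> s = t.
Proof.
  intros [H1 H2] [H3 H4].
  destruct (lt_eq_lt_dec s t) as [[H|H]|H]; auto.
  - assert (T (S s) <= T t) by (apply T_mono; lia). lia.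
  - assert (T (S t) <= T s) by (apply T_mono; lia). lia.
Qed.

Lemma cpair_inj x y x' y' : cpair x y = cpair x' y' -> x = x' /\ y = y'.
Proof.
  intro H. pose proof (cpair_bounds x y). pose proof (cpair_bounds x' y').
  assert (x + y = x' + y') by (eapply T_sandwich; [exact H0| rewrite H; exact H1]).
  rewrite !cpair_T in H. rewrite H2 in H. lia.
Qed.

Lemma cpair_surj z : exists x y, cpair x y = z.
Proof.
  assert (exists s, T s <= z < T (S s)).
  { induction z.
    - exists 0. cbv. lia.
    - destruct IHz as [s [H1 H2]].
      destruct (Nat.eq_dec (S z) (T (S s))).
      + exists (S s). rewrite (T_S (S s)). lia.
      + exists s. lia. }
  destruct H as [s [H1 H2]]. rewrite T_S in H2.
  exists (s - (z - T s)), (z - T s). rewrite cpair_T.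
  replace (s - (z - T s) + (z - T s)) with s by lia. lia.
Qed.

Lemma cpair_ge_l x y : x <= cpair x y.
Proof. rewrite cpair_T. pose proof (T_ge (x+y)). lia. Qed.
Lemma cpair_ge_r x y : y <= cpair x y.
Proof. rewrite cpair_T. lia. Qed.

Fixpoint lc (l : list nat) : nat :=
  match l with [] => 0 | x :: l' => S (cpair x (lc l')) end.

Lemma lc_inj l l' : lc l = lc l' -> l = l'.
Proof.
  revert l'; induction l; destruct l'; simpl; intros H; try discriminate; auto.
  injection H as H. apply cpair_inj in H as [-> H]. f_equal; auto.
Qed.

Fixpoint encl (l : list code) : nat :=
  match l with [] => 0 | g :: l' => S (cpair (encode g) (encl l')) end.

Lemma encode_comp f gs : encode (CComp f gs) = cpair 3 (cpair (encode f) (encl gs)).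
Proof.
  simpl. reflexivity.
Qed.

Fixpoint code_size (c : code) : nat :=
  match c with
  | CComp f gs => S (code_size f + (fix ls (l : list code) : nat :=
       match l with [] => 0 | g :: l' => S (code_size g + ls l') end) gs)
  | CRec f g => S (code_size f + code_size g)
  | CMu f => S (code_size f)
  | _ => 0
  end.

Lemma encode_inj_aux n : forall c c', code_size c + code_size c' <= n -> encode c = encode c' -> c = c'.
Proof.
  induction n; intros c c' Hs He.
  - destruct c, c'; simpl in *; try lia;
    apply cpair_inj in He as [H1 H2]; try discriminate; subst; auto.
  - destruct c, c'; simpl in He; apply cpair_inj in He as [H1 H2]; try discriminate; auto;
    try (subst; reflexivity).
    + apply cpair_inj in H2 as [H2 H3].
      simpl in Hs. f_equal.
      * apply IHn; auto; lia.
      * assert (Hgs: forall gs gs', (fix ls (l : list code) : nat :=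
          match l with [] => 0 | g :: l' => S (code_size g + ls l') end) gs +
          (fix ls (l : list code) : nat :=
          match l with [] => 0 | g :: l' => S (code_size g + ls l') end) gs' <= n ->
          (fix el (l : list code) : nat :=
            match l with [] => 0 | g :: l' => S (cpair (encode g) (el l')) end) gs =
          (fix el (l : list code) : nat :=
            match l with [] => 0 | g :: l' => S (cpair (encode g) (el l')) end) gs' -> gs = gs').
        { clear -IHn. induction gs; destruct gs'; intros Hs He; try discriminate; auto.
          injection He as He. apply cpair_inj in He as [He1 He2].
          f_equal. apply IHn; auto; lia. apply IHgs; auto; lia. }
        apply Hgs; auto; lia.
    + apply cpair_inj in H2 as [H2 H3]. simpl in Hs. f_equal; apply IHn; auto; lia.
    + simpl in Hs. f_equal; apply IHn; auto; lia.
Qed.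

Lemma encode_inj c c' : encode c = encode c' -> c = c'.
Proof. intro; eapply encode_inj_aux; eauto. Qed.

Fixpoint eval_det O c v y (H : eval O c v y) {struct H} : forall y', eval O c v y' -> y = y'
with evals_det O gs v ws (H : evals O gs v ws) {struct H} : forall ws', evals O gs v ws' -> ws = ws'.
Proof.
  - destruct H; intros y' H'; inversion H'; subst; auto.
    + pose proof (evals_det _ _ _ _ H _ H3). subst. exact (eval_det _ _ _ _ H0 _ H6).
    + exact (eval_det _ _ _ _ H _ H4).
    + pose proof (eval_det _ _ _ _ H _ H6). subst. exact (eval_det _ _ _ _ H0 _ H7).
    + destruct (lt_eq_lt_dec k y') as [[Hl|Hl]|Hl]; auto.
      * destruct (H3 k Hl) as [z [Hz Hz']]. exfalso. apply Hz. symmetry. exact (eval_det _ _ _ _ H _ Hz').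
      * destruct (H0 y' Hl) as [z [Hz Hz']]. exfalso. apply Hz. exact (eval_det _ _ _ _ Hz' _ H2).
    + congruence.
  - destruct H; intros ws' H'; inversion H'; subst; auto.
    f_equal; [exact (eval_det _ _ _ _ H _ H3) | exact (evals_det _ _ _ _ H0 _ H6)].
Qed.

Definition sub_or (O O' : nat -> option nat) := forall q a, O q = Some a -> O' q = Some a.

Fixpoint eval_mono O O' (HO : sub_or O O') c v y (H : eval O c v y) {struct H} : eval O' c v y
with evals_mono O O' (HO : sub_or O O') gs v ws (H : evals O gs v ws) {struct H} : evals O' gs v ws.
Proof.
  - destruct H.
    + constructor.
    + constructor.
    + constructor.
    + econstructor; eauto.
    + constructor; eauto.
    + econstructor; eauto.
    + constructor; eauto. intros j Hj. destruct (H0 j Hj) as [z [Hz Hz']].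
      exists z; split; auto. eapply eval_mono; eauto.
    + constructor; auto.
  - destruct H; constructor; eauto.
Qed.

Definition agrees (L : list (nat * nat)) (O : nat -> option nat) :=
  forall q a, In (q, a) L -> O q = Some a.

Fixpoint eval_use O c v y (H : eval O c v y) {struct H} :
  exists L, agrees L O /\ forall O', agrees L O' -> eval O' c v y
with evals_use O gs v ws (H : evals O gs v ws) {struct H} :
  exists L, agrees L O /\ forall O', agrees L O' -> evals O' gs v ws.
Proof.
  - destruct H.
    + exists []. split. intros q a []. intros; constructor.
    + exists []. split. intros q a []. intros; constructor.
    + exists []. split. intros q a []. intros; constructor.
    + destruct (evals_use _ _ _ _ H) as [L1 [A1 B1]].
      destruct (eval_use _ _ _ _ H0) as [L2 [A2 B2]].
      exists (L1 ++ L2). split.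
      * intros q a Hi. apply in_app_or in Hi as [Hi|Hi]; auto.
      * intros O' HA. econstructor; [apply B1|apply B2]; intros q a Hi; apply HA; apply in_or_app; auto.
    + destruct (eval_use _ _ _ _ H) as [L2 [A2 B2]]. exists L2; split; auto. intros; constructor; auto.
    + destruct (eval_use _ _ _ _ H) as [L1 [A1 B1]].
      destruct (eval_use _ _ _ _ H0) as [L2 [A2 B2]].
      exists (L1 ++ L2). split.
      * intros q a Hi. apply in_app_or in Hi as [Hi|Hi]; auto.
      * intros O' HA. econstructor; [apply B1|apply B2]; intros q a Hi; apply HA; apply in_or_app; auto.
    + destruct (eval_use _ _ _ _ H) as [L1 [A1 B1]].
      assert (Hall : forall n, n <= k -> exists L, agrees L O /\ forall O', agrees L O' ->
                 forall j, j < n -> exists z, z <> 0 /\ eval O' f (j :: v) z).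
      { induction n; intros Hn.
        - exists []. split. intros q a []. intros; lia.
        - destruct IHn as [L [A B]]; try lia.
          destruct (H0 n ltac:(lia)) as [z [Hz Hz']].
          destruct (eval_use _ _ _ _ Hz') as [L3 [A3 B3]].
          exists (L ++ L3). split.
          + intros q a Hi. apply in_app_or in Hi as [Hi|Hi]; auto.
          + intros O' HA j Hj. destruct (Nat.eq_dec j n).
            * subst. exists z. split; auto. apply B3. intros q a Hi; apply HA; apply in_or_app; auto.
            * apply B; try lia. intros q a Hi; apply HA; apply in_or_app; auto. }
      destruct (Hall k (le_n _)) as [L2 [A2 B2]].
      exists (L1 ++ L2). split.
      * intros q a Hi. apply in_app_or in Hi as [Hi|Hi]; auto.
      * intros O' HA. constructor. apply B1. intros q a Hi; apply HA; apply in_or_app; auto.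
        apply B2. intros q a Hi; apply HA; apply in_or_app; auto.
    + exists [(nth 0 v 0, y)]. split.
      * intros q a [Hi|[]]. injection Hi as <- <-. auto.
      * intros O' HA. constructor. apply HA. left; auto.
  - destruct H.
    + exists []. split. intros q a []. intros; constructor.
    + destruct (eval_use _ _ _ _ H) as [L1 [A1 B1]].
      destruct (evals_use _ _ _ _ H0) as [L2 [A2 B2]].
      exists (L1 ++ L2). split.
      * intros q a Hi. apply in_app_or in Hi as [Hi|Hi]; auto.
      * intros O' HA. econstructor; [apply B1|apply B2]; intros q a Hi; apply HA; apply in_or_app; auto.
Qed.

Lemma Phi_det e O n y y' : Phi e O n y -> Phi e O n y' -> y = y'.
Proof.
  intros [c [Hc H]] [c' [Hc' H']]. subst. apply encode_inj in Hc'. subst. eapply eval_det; eauto.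
Qed.

Lemma Bapp_det f g n y y' : Bapp f g n y -> Bapp f g n y' -> y = y'.
Proof.
  intros [e [He H]] [e' [He' H']]. rewrite He in He'. injection He' as <-. eapply Phi_det; eauto.
Qed.

Lemma phi_det e n y y' : phi e n y -> phi e n y' -> y = y'.
Proof. apply Phi_det. Qed.

Inductive exp : Type :=
| Var (i : nat)
| Zero
| Succ (e : exp)
| Comp (f : exp) (args : list exp)
| Rec (n b s : exp).

Fixpoint den (e : exp) (env : list nat) {struct e} : nat :=
  match e with
  | Var i => nth i env 0
  | Zero => 0
  | Succ e => S (den e env)
  | Comp f args => den f (map (fun a => den a env) args)
  | Rec n b s => nat_rec (fun _ => nat) (den b env) (fun k z => den s (k :: z :: env)) (den n env)
  end.

Fixpoint compile (e : exp) (n : nat) {struct e} : code :=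
  match e with
  | Var i => CProj i
  | Zero => CZero
  | Succ e => CComp CSucc [compile e n]
  | Comp f args => CComp (compile f (length args)) (map (fun a => compile a n) args)
  | Rec ne b s => CComp (CRec (compile b n) (compile s (S (S n)))) (compile ne n :: map CProj (seq 0 n))
  end.

Lemma map_nth_seq (env : list nat) : map (fun i => nth i env 0) (seq 0 (length env)) = env.
Proof.
  induction env; simpl; auto. f_equal. rewrite <- seq_shift, map_map. simpl. auto.
Qed.

Lemma evals_proj O env : evals O (map CProj (seq 0 (length env))) env env.
Proof.
  pose proof (map_nth_seq env) as H.
  set (l := seq 0 (length env)) in *. clearbody l.
  rewrite <- H at 2. clear H. induction l; simpl; constructor; auto. constructor.
Qed.

Fixpoint compile_ok O (e : exp) {struct e} : forall env, eval O (compile e (length env)) env (den e env).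
Proof.
  destruct e as [i| |e|f args|ne b s]; intro env; simpl.
  - constructor.
  - constructor.
  - econstructor. constructor. apply compile_ok. constructor. constructor.
  - econstructor.
    2: { rewrite <- (length_map (fun a => den a env) args). apply compile_ok. }
    induction args as [|a args IH]; simpl; constructor; auto.
  - econstructor.
    + constructor. apply compile_ok. apply evals_proj.
    + generalize (den ne env). intro k. induction k; simpl.
      * constructor. apply compile_ok.
      * econstructor. exact IHk.
        change (S (S (length env))) with (length (k :: nat_rec (fun _ => nat) (den b env) (fun k z => den s (k :: z :: env)) k :: env)).
        apply compile_ok.
Qed.

Fixpoint Const (k : nat) : exp := match k with 0 => Zero | S k => Succ (Const k) end.
Lemma den_Const k env : den (Const k) env = k.
Proof. induction k; simpl; auto. Qed.

Lemma nat_rec_eq (b : nat) (s : nat -> nat -> nat) (F : nat -> nat) :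
  F 0 = b -> (forall k, F (S k) = s k (F k)) -> forall n, nat_rec (fun _ => nat) b s n = F n.
Proof. intros H0 HS n. induction n; simpl; auto. rewrite HS, IHn. auto. Qed.

Lemma den_Comp f args env : den (Comp f args) env = den f (map (fun a => den a env) args).
Proof. reflexivity. Qed.
Lemma den_Var i env : den (Var i) env = nth i env 0.
Proof. reflexivity. Qed.
Lemma den_Succ e env : den (Succ e) env = S (den e env).
Proof. reflexivity. Qed.
Lemma den_Zero env : den Zero env = 0.
Proof. reflexivity. Qed.

Definition addF := Rec (Var 0) (Var 1) (Succ (Var 1)).
Definition Add a b := Comp addF [a; b].
Arguments Add : simpl never.
Lemma den_Add a b env : den (Add a b) env = den a env + den b env.
Proof. unfold Add. rewrite den_Comp. simpl. induction (den a env); simpl; auto. Qed.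

Definition mulF := Rec (Var 0) Zero (Add (Var 1) (Var 3)).
Definition Mul a b := Comp mulF [a; b].
Arguments Mul : simpl never.
Lemma den_Mul a b env : den (Mul a b) env = den a env * den b env.
Proof. unfold Mul. rewrite den_Comp. unfold mulF. cbn -[Add].
  rewrite (nat_rec_eq _ _ (fun m => m * den b env)); auto.
  intros k. rewrite den_Add. cbn -[Add]. lia. Qed.

Definition predF := Rec (Var 0) Zero (Var 0).
Definition Pred a := Comp predF [a].
Arguments Pred : simpl never.
Lemma den_Pred a env : den (Pred a) env = pred (den a env).
Proof. unfold Pred. rewrite den_Comp. simpl. destruct (den a env); simpl; auto. Qed.

Definition subF := Rec (Var 1) (Var 0) (Pred (Var 1)).
Definition Sub a b := Comp subF [a; b].
Arguments Sub : simpl never.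
Lemma den_Sub a b env : den (Sub a b) env = den a env - den b env.
Proof. unfold Sub. rewrite den_Comp. unfold subF. cbn -[Pred].
  rewrite (nat_rec_eq _ _ (fun m => den a env - m)); auto. lia.
  intros k. rewrite den_Pred. cbn -[Pred]. lia. Qed.

Definition ifzF := Rec (Var 0) (Var 1) (Var 4).
Definition Ifz c a b := Comp ifzF [c; a; b].
Arguments Ifz : simpl never.
Lemma den_Ifz c a b env : den (Ifz c a b) env = if den c env =? 0 then den a env else den b env.
Proof. unfold Ifz. rewrite den_Comp. simpl. destruct (den c env); simpl; auto. Qed.

Definition Eqn a b := Add (Sub a b) (Sub b a).
Arguments Eqn : simpl never.
Lemma den_Eqn a b env : den (Eqn a b) env = 0 <-> den a env = den b env.
Proof. unfold Eqn. rewrite den_Add, !den_Sub. lia. Qed.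

Definition oddF := Rec (Var 0) Zero (Sub (Const 1) (Var 1)).
Definition Odd a := Comp oddF [a].
Arguments Odd : simpl never.
Lemma den_Odd a env : den (Odd a) env = Nat.b2n (Nat.odd (den a env)).
Proof. unfold Odd. rewrite den_Comp. unfold oddF. cbn -[Sub Const].
  rewrite (nat_rec_eq _ _ (fun m => Nat.b2n (Nat.odd m))); auto.
  intros k. rewrite den_Sub, den_Const. cbn -[Sub]. rewrite Nat.odd_succ, <- Nat.negb_odd.
  destruct (Nat.odd k); reflexivity. Qed.

Lemma div2_S k : Nat.div2 (S k) = Nat.div2 k + Nat.b2n (Nat.odd k).
Proof.
  pose proof (Nat.div2_odd k). pose proof (Nat.div2_odd (S k)).
  rewrite Nat.odd_succ, <- Nat.negb_odd in H0. destruct (Nat.odd k); simpl in *; lia.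
Qed.

Definition div2F := Rec (Var 0) Zero (Add (Var 1) (Odd (Var 0))).
Definition Div2 a := Comp div2F [a].
Arguments Div2 : simpl never.
Lemma den_Div2 a env : den (Div2 a) env = Nat.div2 (den a env).
Proof. unfold Div2. rewrite den_Comp. unfold div2F. cbn -[Add Odd].
  rewrite (nat_rec_eq _ _ Nat.div2); auto.
  intros k. rewrite den_Add, den_Odd. cbn -[Add Nat.div2]. rewrite div2_S. reflexivity. Qed.

Definition pairF := Add (Div2 (Mul (Add (Var 0) (Var 1)) (Succ (Add (Var 0) (Var 1))))) (Var 1).
Definition Pair a b := Comp pairF [a; b].
Arguments Pair : simpl never.
Lemma den_Pair a b env : den (Pair a b) env = cpair (den a env) (den b env).
Proof. unfold Pair. rewrite den_Comp. unfold pairF.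
  rewrite den_Add, den_Div2, den_Mul, den_Succ, !den_Add. simpl.
  unfold cpair. rewrite Nat.div2_div. f_equal. f_equal. f_equal. lia. Qed.

Lemma map_den_vars pre vs : map (fun a => den a (pre ++ vs)) (map Var (seq (length pre) (length vs))) = vs.
Proof.
  rewrite map_map. simpl. revert pre. induction vs; intros pre; simpl; auto.
  f_equal.
  - rewrite app_nth2 by lia. rewrite Nat.sub_diag. reflexivity.
  - specialize (IHvs (pre ++ [a])). rewrite length_app in IHvs. simpl in IHvs.
    rewrite <- app_assoc in IHvs. simpl in IHvs. rewrite Nat.add_1_r in IHvs. exact IHvs.
Qed.

Definition BEx (P n : exp) (args : list exp) :=
  Comp (Rec (Var 0) (Const 1) (Mul (Var 1) (Comp P (Var 0 :: map Var (seq 3 (length args)))))) (n :: args).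
Arguments BEx : simpl never.

Lemma nat_rec_ext b s s' n : (forall k z, s k z = s' k z) ->
  nat_rec (fun _ => nat) b s n = nat_rec (fun _ => nat) b s' n.
Proof. intro H. induction n; simpl; auto. rewrite IHn. auto. Qed.

Lemma map_den_vars3 x y z vs : map (fun a => den a (x :: y :: z :: vs)) (map Var (seq 3 (length vs))) = vs.
Proof. exact (map_den_vars [x; y; z] vs). Qed.

Lemma den_BEx P n args env :
  den (BEx P n args) env = 0 <->
  exists i, i < den n env /\ den P (i :: map (fun a => den a env) args) = 0.
Proof.
  unfold BEx. rewrite den_Comp. cbn -[Mul Const].
  set (vs := map (fun a => den a env) args).
  assert (Hl : length args = length vs) by (unfold vs; rewrite length_map; auto).
  rewrite Hl.
  rewrite (nat_rec_ext _ _ (fun k z => z * den P (k :: vs))).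
  2: { intros k z. rewrite den_Mul, den_Comp. cbn -[Mul]. rewrite map_den_vars3. reflexivity. }
  rewrite den_Const. induction (den n env) as [|m IH]; simpl.
  - split; [discriminate| intros [i [Hi _]]; lia].
  - rewrite Nat.mul_eq_0, IH. split.
    + intros [[i [Hi H]]|H]; exists i || exists m; split; auto; lia.
    + intros [i [Hi H]]. destruct (Nat.eq_dec i m); [subst; auto| left; exists i; split; auto; lia].
Qed.

Definition BAll (P n : exp) (args : list exp) :=
  Comp (Rec (Var 0) Zero (Add (Var 1) (Comp P (Var 0 :: map Var (seq 3 (length args)))))) (n :: args).
Arguments BAll : simpl never.

Lemma den_BAll P n args env :
  den (BAll P n args) env = 0 <->
  forall i, i < den n env -> den P (i :: map (fun a => den a env) args) = 0.
Proof.
  unfold BAll. rewrite den_Comp. cbn -[Add].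
  set (vs := map (fun a => den a env) args).
  assert (Hl : length args = length vs) by (unfold vs; rewrite length_map; auto).
  rewrite Hl.
  rewrite (nat_rec_ext _ _ (fun k z => z + den P (k :: vs))).
  2: { intros k z. rewrite den_Add, den_Comp. cbn -[Add]. rewrite map_den_vars3. reflexivity. }
  induction (den n env) as [|m IH]; simpl.
  - split; auto; intros; lia.
  - rewrite Nat.eq_add_0, IH. split.
    + intros [H1 H2] i Hi. destruct (Nat.eq_dec i m); [subst; auto| apply H1; lia].
    + intros H. split; auto.
Qed.

Definition USum (P n : exp) (args : list exp) :=
  Comp (Rec (Var 0) Zero (Add (Var 1) (Ifz (Comp P (Var 0 :: map Var (seq 3 (length args)))) (Var 0) Zero))) (n :: args).
Arguments USum : simpl never.

Lemma den_USum P n args env x :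
  (forall i, i < den n env -> (den P (i :: map (fun a => den a env) args) = 0 <-> i = x)) ->
  x < den n env -> den (USum P n args) env = x.
Proof.
  unfold USum. rewrite den_Comp. cbn -[Add Ifz].
  set (vs := map (fun a => den a env) args).
  assert (Hl : length args = length vs) by (unfold vs; rewrite length_map; auto).
  rewrite Hl.
  rewrite (nat_rec_ext _ _ (fun k z => z + (if den P (k :: vs) =? 0 then k else 0))).
  2: { intros k z. rewrite den_Add, den_Ifz, den_Comp. cbn -[Add]. rewrite map_den_vars3. reflexivity. }
  intros H Hx.
  assert (forall m, m <= den n env -> nat_rec (fun _ => nat) 0
     (fun k z => z + (if den P (k :: vs) =? 0 then k else 0)) m = if x <? m then x else 0).
  { induction m; intros Hm; simpl; auto.
    rewrite IHm by lia. destruct (Nat.eq_dec m x).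
    - subst. assert (den P (x :: vs) = 0) by (apply H; auto; lia). rewrite H0. simpl.
      rewrite Nat.ltb_irrefl. destruct (x <? S x) eqn:E; auto. apply Nat.ltb_nlt in E; lia.
    - destruct (den P (m :: vs) =? 0) eqn:E.
      + apply Nat.eqb_eq, H in E; lia.
      + destruct (x <? m) eqn:E1; destruct (x <? S m) eqn:E2; auto;
        try (apply Nat.ltb_lt in E1; apply Nat.ltb_nlt in E2; lia);
        try (apply Nat.ltb_nlt in E1; apply Nat.ltb_lt in E2; lia). }
  rewrite H0 by lia. apply Nat.ltb_lt in Hx. rewrite Hx. auto.
Qed.

Definition fyP := Eqn (Pair (Var 1) (Var 0)) (Var 2).          (* [y; x; z] *)
Definition fxP := BEx fyP (Succ (Var 1)) [Var 0; Var 1].       (* [x; z] *)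
Definition fstF := USum fxP (Succ (Var 0)) [Var 0].            (* [z] *)
Definition sxP := Eqn (Pair (Var 0) (Var 1)) (Var 2).          (* [x; y; z] *)
Definition syP := BEx sxP (Succ (Var 1)) [Var 0; Var 1].       (* [y; z] *)
Definition sndF := USum syP (Succ (Var 0)) [Var 0].

Definition cfst z := den fstF [z].
Definition csnd z := den sndF [z].

Lemma cfst_pair x y : cfst (cpair x y) = x.
Proof.
  unfold cfst, fstF. apply den_USum.
  - intros i Hi. cbn -[fxP]. unfold fxP. rewrite den_BEx. cbn -[fyP]. split.
    + intros [j [Hj H]]. unfold fyP in H. rewrite den_Eqn, den_Pair in H. cbn in H.
      apply cpair_inj in H. lia.
    + intros ->. exists y. split. cbn -[cpair]. pose proof (cpair_ge_r x y). lia.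
      unfold fyP. rewrite den_Eqn, den_Pair. reflexivity.
  - cbn -[cpair]. pose proof (cpair_ge_l x y). lia.
Qed.

Lemma csnd_pair x y : csnd (cpair x y) = y.
Proof.
  unfold csnd, sndF. apply den_USum.
  - intros i Hi. cbn -[syP]. unfold syP. rewrite den_BEx. cbn -[sxP]. split.
    + intros [j [Hj H]]. unfold sxP in H. rewrite den_Eqn, den_Pair in H. cbn in H.
      apply cpair_inj in H. lia.
    + intros ->. exists x. split. cbn -[cpair]. pose proof (cpair_ge_l x y). lia.
      unfold sxP. rewrite den_Eqn, den_Pair. reflexivity.
  - cbn -[cpair]. pose proof (cpair_ge_r x y). lia.
Qed.

Lemma cpair_fst_snd z : cpair (cfst z) (csnd z) = z.
Proof. destruct (cpair_surj z) as [x [y <-]]. rewrite cfst_pair, csnd_pair. auto. Qed.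

Definition Fst a := Comp fstF [a].
Definition Snd a := Comp sndF [a].
Arguments Fst : simpl never.
Arguments Snd : simpl never.
Lemma den_Fst a env : den (Fst a) env = cfst (den a env).
Proof. reflexivity. Qed.
Lemma den_Snd a env : den (Snd a) env = csnd (den a env).
Proof. reflexivity. Qed.

Lemma cfst0 : cfst 0 = 0.
Proof. exact (cfst_pair 0 0). Qed.
Lemma csnd0 : csnd 0 = 0.
Proof. exact (csnd_pair 0 0). Qed.

Definition Cons h t := Succ (Pair h t).
Arguments Cons : simpl never.
Lemma den_Cons h t env : den (Cons h t) env = S (cpair (den h env) (den t env)).
Proof. unfold Cons. rewrite den_Succ, den_Pair. auto. Qed.

Definition ltl w := csnd (pred w).
Definition lhd w := cfst (pred w).
Definition ldrop k w := nat_rec (fun _ => nat) w (fun _ z => ltl z) k.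
Definition lnth k w := lhd (ldrop k w).

Definition lnthF := Fst (Pred (Rec (Var 0) (Var 1) (Snd (Pred (Var 1))))).  (* [k; w] *)
Definition Lnth k w := Comp lnthF [k; w].
Arguments Lnth : simpl never.
Lemma den_Lnth k w env : den (Lnth k w) env = lnth (den k env) (den w env).
Proof.
  unfold Lnth. rewrite den_Comp. unfold lnthF. rewrite den_Fst, den_Pred. cbn -[Snd Pred].
  unfold lnth, lhd, ldrop. f_equal. f_equal.
  apply nat_rec_ext. intros. rewrite den_Snd, den_Pred. reflexivity.
Qed.

Lemma ltl_lc x l : ltl (lc (x :: l)) = lc l.
Proof. unfold ltl. simpl. apply csnd_pair. Qed.
Lemma ltl0 : ltl 0 = 0.
Proof. unfold ltl. apply csnd0. Qed.
Lemma lhd_lc x l : lhd (lc (x :: l)) = x.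
Proof. unfold lhd. simpl. apply cfst_pair. Qed.
Lemma lhd0 : lhd 0 = 0.
Proof. unfold lhd. apply cfst0. Qed.

Lemma ldrop_S k w : ldrop (S k) w = ldrop k (ltl w).
Proof.
  unfold ldrop. revert w. induction k; intros w; simpl; auto.
  f_equal. apply IHk.
Qed.

Lemma ldrop0_any k : ldrop k 0 = 0.
Proof. induction k; simpl; auto. unfold ldrop in *. simpl. rewrite IHk. apply ltl0. Qed.

Lemma lnth_lc i l : lnth i (lc l) = nth i l 0.
Proof.
  unfold lnth. revert i; induction l; intros i.
  - simpl. rewrite ldrop0_any. destruct i; apply lhd0.
  - destruct i.
    + simpl. apply lhd_lc.
    + rewrite ldrop_S. change (S (cpair a (lc l))) with (lc (a :: l)). rewrite ltl_lc. apply IHl.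
Qed.

Lemma lnth_cons0 x w : lnth 0 (S (cpair x w)) = x.
Proof. unfold lnth, lhd. simpl. apply cfst_pair. Qed.

Definition tbF := Odd (Rec (Var 0) (Var 1) (Div2 (Var 1))).  (* [p; u] *)
Definition Tb u p := Comp tbF [p; u].
Arguments Tb : simpl never.
Lemma den_Tb u p env : den (Tb u p) env = Nat.b2n (Nat.testbit (den u env) (den p env)).
Proof.
  unfold Tb. rewrite den_Comp. unfold tbF. rewrite den_Odd. cbn -[Div2].
  rewrite Nat.testbit_odd. f_equal. f_equal.
  rewrite (nat_rec_eq _ _ (fun m => Nat.shiftr (den u env) m)); auto.
  intros k. rewrite den_Div2. cbn -[Nat.shiftr Nat.div2].
  rewrite Nat.div2_spec. rewrite !Nat.shiftr_shiftr. f_equal. lia.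
Qed.

Definition G3 := CComp COrc [compile (Const 3) 1].
Definition G4 := CComp COrc [compile (Const 4) 1].
Definition Iexp := Pair (Const 3) (Pair (Var 2) (Cons (Const (encode (CProj 0)))
   (Cons (Pair (Const 3) (Pair (Var 1) (Cons (Const (encode G3)) Zero))) (Cons (Const (encode G4)) Zero)))).
Definition Hexp := Ifz (Var 0) Iexp (Ifz (Pred (Var 0)) (Var 1) (Var 2)).
Definition Hc := compile Hexp 3.
Definition hc := encode Hc.
Definition fK (a n : nat) := den Hexp [n; a; hc].
Definition Pa (Ca : code) := CComp Hc [CProj 0; CComp Ca [G3]; G4].

Lemma fK0 a : fK a 0 = den Iexp [0; a; hc].
Proof. unfold fK, Hexp. rewrite den_Ifz. reflexivity. Qed.
Lemma fK1 a : fK a 1 = a.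
Proof. unfold fK, Hexp. rewrite !den_Ifz, den_Pred. reflexivity. Qed.
Lemma fK2 a : fK a 2 = hc.
Proof. unfold fK, Hexp. rewrite !den_Ifz, den_Pred. reflexivity. Qed.

Lemma fK0_enc Ca : fK (encode Ca) 0 = encode (Pa Ca).
Proof.
  rewrite fK0. unfold Iexp.
  rewrite !den_Pair, !den_Cons, !den_Pair, !den_Cons, !den_Const, den_Zero.
  unfold Pa. rewrite (encode_comp Hc [CProj 0; CComp Ca [G3]; G4]). cbn [encl].
  rewrite (encode_comp Ca [G3]). cbn [encl].
  cbn [den nth]. unfold hc. reflexivity.
Qed.

Lemma fK_tc a : total_computable (fK a).
Proof.
  exists (encode (compile (Comp Hexp [Var 0; Const a; Const hc]) 1)).
  intros n. exists (compile (Comp Hexp [Var 0; Const a; Const hc]) 1). split; [reflexivity|].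
  pose proof (compile_ok empty_oracle (Comp Hexp [Var 0; Const a; Const hc]) [n]) as H.
  cbn [length] in H. rewrite den_Comp in H. cbn [map] in H. rewrite !den_Const, den_Var in H.
  cbn [nth] in H. unfold fK. exact H.
Qed.

Definition fE (a : K1) : K2eff := exist _ (fK a) (fK_tc a).

Lemma sub_or_empty O : sub_or empty_oracle O.
Proof. intros q a H. discriminate. Qed.

Lemma emb1 : embedding K1_app K2eff_app fE.
Proof.
  split.
  - intros a a' H. apply (f_equal (@proj1_sig _ _)) in H. unfold fE in H. cbn [proj1_sig] in H.
    rewrite <- (fK1 a), <- (fK1 a'), H. reflexivity.
  - intros a b c [Ca [Ha Hc']]. subst a. intros n. unfold fE. cbn [proj1_sig].
    exists (fK (encode Ca) 0). split; [reflexivity|].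
    rewrite fK0_enc. exists (Pa Ca). split; [reflexivity|].
    set (O := join (fun x => Some (fK (encode Ca) x)) (fun x => Some (fK b x))).
    unfold Pa. econstructor.
    + constructor. constructor.
      constructor.
      * econstructor. constructor.
        -- econstructor. constructor.
           ++ pose proof (compile_ok O (Const 3) [n]) as H. rewrite den_Const in H. exact H.
           ++ constructor.
           ++ constructor. cbn [nth]. unfold O, join. cbn [Nat.odd Nat.even negb Nat.div2]. rewrite fK1. reflexivity.
        -- constructor.
        -- eapply eval_mono; [apply sub_or_empty| exact Hc'].
      * constructor.
        -- econstructor. constructor.
           ++ pose proof (compile_ok O (Const 4) [n]) as H. rewrite den_Const in H. exact H.
           ++ constructor.
           ++ constructor. cbn [nth]. unfold O, join. cbn [Nat.odd Nat.even negb Nat.div2]. rewrite fK2. reflexivity.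
        -- constructor.
    + exact (compile_ok O Hexp [n; c; hc]).
Qed.

Lemma tc_pc (f : nat -> nat) : total_computable f -> partial_computable (fun n => Some (f n)).
Proof.
  intros [e He]. exists e. intros n y. split.
  - intros H. injection H as <-. auto.
  - intros H. f_equal. eapply phi_det; eauto.
Qed.

Definition gE (a : K2eff) : Beff := exist _ (fun n => Some (proj1_sig a n)) (tc_pc _ (proj2_sig a)).

Lemma emb2 : embedding K2eff_app Beff_app gE.
Proof.
  split.
  - intros [a Ha] [a' Ha'] H. unfold gE in H. simpl in H. injection H as H.
    assert (a = a').
    { apply functional_extensionality. intro x. apply (f_equal (fun F => F x)) in H. congruence. }
    subst. f_equal. apply proof_irrelevance.
  - intros a b c H n y. simpl. split.
    + intros E. injection E as <-. apply H.
    + intros E. f_equal. eapply Bapp_det; [apply H| exact E].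
Qed.

Definition tbit u z y := Nat.testbit u (cpair (cpair z y) 1).
Definition tab (u : nat) : nat -> option nat :=
  fun z => find (fun y => tbit u z y) (seq 0 u).

Lemma bit_lt u p : Nat.testbit u p = true -> p < u.
Proof.
  intros H. destruct u. rewrite Nat.bits_0 in H; discriminate.
  destruct (le_lt_dec p (Nat.log2 (S u))).
  - pose proof (Nat.log2_lt_lin (S u)). lia.
  - rewrite Nat.bits_above_log2 in H; auto; discriminate.
Qed.

Lemma find_seq_spec (f : nat -> bool) s n y :
  find f (seq s n) = Some y <-> (s <= y < s + n /\ f y = true /\ forall y', s <= y' < y -> f y' = false).
Proof.
  revert s. induction n; intros s; simpl.
  - split; [discriminate| lia].
  - destruct (f s) eqn:E.
    + split.
      * intros H; injection H as <-. split; [lia|split; auto]. intros; lia.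
      * intros [H1 [H2 H3]]. destruct (Nat.eq_dec y s); [congruence|].
        rewrite H3 in E; [discriminate|lia].
    + rewrite IHn. split.
      * intros [H1 [H2 H3]]. split; [lia|split; auto]. intros y' Hy'.
        destruct (Nat.eq_dec y' s); [subst; auto| apply H3; lia].
      * intros [H1 [H2 H3]]. destruct (Nat.eq_dec y s); [congruence|].
        split; [lia|split; auto]. intros; apply H3; lia.
Qed.

Lemma tab_spec u z y : tab u z = Some y <-> tbit u z y = true /\ forall y', y' < y -> tbit u z y' = false.
Proof.
  unfold tab. rewrite find_seq_spec. split.
  - intros [_ [H1 H2]]. split; auto. intros; apply H2; lia.
  - intros [H1 H2]. split; [|split; auto; intros; apply H2; lia].
    apply bit_lt in H1. pose proof (cpair_ge_r (cpair z y) 1). pose proof (cpair_ge_r z y).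
    pose proof (cpair_ge_l (cpair z y) 1). lia.
Qed.

Lemma tab_exists u z y : tbit u z y = true -> exists y', tab u z = Some y'.
Proof.
  intros H. induction y as [y IH] using (well_founded_induction lt_wf).
  destruct (classic (exists y', y' < y /\ tbit u z y' = true)) as [[y' [H1 H2]]|Hn].
  - apply (IH y'); auto.
  - exists y. apply tab_spec. split; auto. intros y' Hy'.
    destruct (tbit u z y') eqn:E; auto. exfalso; apply Hn; eauto.
Qed.

Definition AppF (c s : nat -> option nat) : nat -> option nat :=
  fun z => match excluded_middle_informative (exists y, Bapp c s z y) with
           | left H => Some (proj1_sig (constructive_indefinite_description _ H))
           | right _ => None end.

Lemma AppF_spec c s z y : AppF c s z = Some y <-> Bapp c s z y.
Proof.
  unfold AppF. destruct excluded_middle_informative as [H|H].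
  - destruct constructive_indefinite_description as [y' Hy']. simpl. split.
    + intros E; injection E as <-; auto.
    + intros E. f_equal. eapply Bapp_det; eauto.
  - split; [discriminate| intros E; exfalso; eauto].
Qed.

Lemma join_mono c c' s s' : sub_or c c' -> sub_or s s' -> sub_or (join c s) (join c' s').
Proof. intros H1 H2 q a. unfold join. destruct (Nat.odd q); auto. Qed.

Lemma AppF_mono c c' s s' : sub_or c c' -> sub_or s s' -> sub_or (AppF c s) (AppF c' s').
Proof.
  intros H1 H2 z w. rewrite !AppF_spec. intros [e [He [C [HC HE]]]].
  exists e. split; auto. exists C. split; auto. eapply eval_mono; [|exact HE]. apply join_mono; auto.
Qed.

Inductive Mem : (nat -> option nat) -> nat -> Prop :=
| MemBase c x y : c x = Some y -> Mem c (cpair (cpair x y) 1)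
| MemStep c m u : Nat.testbit u 0 = false -> Mem (AppF c (tab u)) m -> Mem c (cpair m u).

Lemma Mem_mono c n : Mem c n -> forall c', sub_or c c' -> Mem c' n.
Proof.
  induction 1; intros c' Hc.
  - constructor. auto.
  - constructor; auto. apply IHMem. apply AppF_mono; auto. intros q a; auto.
Qed.

Lemma cpair_eq0 x y : cpair x y = 0 -> x = 0 /\ y = 0.
Proof. intros H. apply cpair_inj. rewrite H. reflexivity. Qed.

Lemma Mem_not0 c : ~ Mem c 0.
Proof.
  intro H. remember 0 as n eqn:En. revert En. induction H; intros En.
  - apply cpair_eq0 in En. lia.
  - apply cpair_eq0 in En as [-> ->]. auto.
Qed.

Lemma Mem_base_iff c x y : Mem c (cpair (cpair x y) 1) <-> c x = Some y.
Proof.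
  split.
  - intros H. inversion H as [c0 x0 y0 H0 E1 E2|c0 m u Hu H0 E1 E2].
    + apply cpair_inj in E2 as [E2 _]. apply cpair_inj in E2 as [-> ->]. auto.
    + apply cpair_inj in E2 as [_ E3]. subst u. discriminate.
  - apply MemBase.
Qed.

Lemma agrees_app L1 L2 O : agrees (L1 ++ L2) O <-> agrees L1 O /\ agrees L2 O.
Proof.
  unfold agrees. split.
  - intros H; split; intros; apply H; apply in_or_app; auto.
  - intros [H1 H2] q a Hi. apply in_app_or in Hi as [Hi|Hi]; auto.
Qed.

Definition evq (L : list (nat * nat)) := flat_map (fun '(q, a) => if Nat.odd q then [] else [(Nat.div2 q, a)]) L.
Definition odq (L : list (nat * nat)) := flat_map (fun '(q, a) => if Nat.odd q then [(Nat.div2 q, a)] else []) L.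

Lemma agrees_join L c s c' s' : agrees L (join c s) -> agrees (evq L) c' -> agrees (odq L) s' -> agrees L (join c' s').
Proof.
  intros H H1 H2 q a Hi. unfold join. destruct (Nat.odd q) eqn:E.
  - apply H2. unfold odq. apply in_flat_map. exists (q, a). rewrite E. simpl; auto.
  - apply H1. unfold evq. apply in_flat_map. exists (q, a). rewrite E. simpl; auto.
Qed.

Lemma agrees_evq L c s : agrees L (join c s) -> agrees (evq L) c.
Proof.
  intros H z a Hi. unfold evq in Hi. apply in_flat_map in Hi as [[q a'] [Hi Hi']].
  destruct (Nat.odd q) eqn:E; simpl in Hi'; [contradiction|]. destruct Hi' as [Hi'|[]].
  injection Hi' as <- <-. specialize (H _ _ Hi). unfold join in H. rewrite E in H. auto.
Qed.

Lemma agrees_odq L c s : agrees L (join c s) -> agrees (odq L) s.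
Proof.
  intros H z a Hi. unfold odq in Hi. apply in_flat_map in Hi as [[q a'] [Hi Hi']].
  destruct (Nat.odd q) eqn:E; simpl in Hi'; [|contradiction]. destruct Hi' as [Hi'|[]].
  injection Hi' as <- <-. specialize (H _ _ Hi). unfold join in H. rewrite E in H. auto.
Qed.

Lemma Bapp_cont_l c s z w : Bapp c s z w ->
  exists L, agrees L c /\ forall c', agrees L c' -> Bapp c' s z w.
Proof.
  intros [e [He [C [HC HE]]]]. destruct (eval_use _ _ _ _ HE) as [L [HL HL']].
  exists ((0, e) :: evq L). split.
  - intros q a [Hi|Hi]; [injection Hi as <- <-; auto| eapply agrees_evq; eauto].
  - intros c' Hc'. exists e. split; [apply Hc'; left; auto|]. exists C. split; auto.
    apply HL'. eapply agrees_join; eauto.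
    + intros q a Hi; apply Hc'; right; auto.
    + eapply agrees_odq; eauto.
Qed.

Lemma Bapp_cont_r c s z w : Bapp c s z w ->
  exists L, agrees L s /\ forall s', agrees L s' -> Bapp c s' z w.
Proof.
  intros [e [He [C [HC HE]]]]. destruct (eval_use _ _ _ _ HE) as [L [HL HL']].
  exists (odq L). split.
  - eapply agrees_odq; eauto.
  - intros s' Hs'. exists e. split; auto. exists C. split; auto.
    apply HL'. eapply agrees_join; eauto. eapply agrees_evq; eauto.
Qed.

Lemma agrees_AppF_l L c s : agrees L (AppF c s) ->
  exists L', agrees L' c /\ forall c', agrees L' c' -> agrees L (AppF c' s).
Proof.
  induction L as [|[z w] L IH]; intros H.
  - exists []. split; [intros q a []| intros c0 _ q a []].
  - destruct IH as [L1 [H1 H1']]. intros q a Hi; apply H; right; auto.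
    assert (Bapp c s z w) by (apply AppF_spec, H; left; auto).
    destruct (Bapp_cont_l _ _ _ _ H0) as [L2 [H2 H2']].
    exists (L1 ++ L2). split. apply agrees_app; auto.
    intros c' Hc'. apply agrees_app in Hc' as [Hc1 Hc2]. intros q a [Hi|Hi].
    + injection Hi as <- <-. apply AppF_spec. auto.
    + apply H1'; auto.
Qed.

Lemma agrees_AppF_r L c s : agrees L (AppF c s) ->
  exists L', agrees L' s /\ forall s', agrees L' s' -> agrees L (AppF c s').
Proof.
  induction L as [|[z w] L IH]; intros H.
  - exists []. split; [intros q a []| intros c0 _ q a []].
  - destruct IH as [L1 [H1 H1']]. intros q a Hi; apply H; right; auto.
    assert (Bapp c s z w) by (apply AppF_spec, H; left; auto).
    destruct (Bapp_cont_r _ _ _ _ H0) as [L2 [H2 H2']].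
    exists (L1 ++ L2). split. apply agrees_app; auto.
    intros s' Hs'. apply agrees_app in Hs' as [Hs1 Hs2]. intros q a [Hi|Hi].
    + injection Hi as <- <-. apply AppF_spec. auto.
    + apply H1'; auto.
Qed.

Lemma Mem_cont c n : Mem c n -> exists L, agrees L c /\ forall c', agrees L c' -> Mem c' n.
Proof.
  induction 1.
  - exists [(x, y)]. split.
    + intros q a [Hi|[]]. injection Hi as <- <-; auto.
    + intros c' Hc'. constructor. apply Hc'. left; auto.
  - destruct IHMem as [L [HL HL']].
    destruct (agrees_AppF_l _ _ _ HL) as [L' [H1 H2]].
    exists L'. split; auto. intros c' Hc'. constructor; auto.
Qed.

Definition mku (L : list (nat * nat)) : nat :=
  fold_right (fun '(x, y) acc => Nat.setbit acc (cpair (cpair x y) 1)) 0 L.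

Lemma mku_bit L p : Nat.testbit (mku L) p = true <-> exists x y, In (x, y) L /\ p = cpair (cpair x y) 1.
Proof.
  induction L as [|[x y] L IH]; simpl.
  - rewrite Nat.bits_0. split; [discriminate| intros [x [y [[] _]]]].
  - rewrite Nat.setbit_iff, IH. split.
    + intros [<-|[x' [y' [H1 H2]]]]; eauto.
    + intros [x1 [y1 [[H1|H1] H2]]]; [injection H1 as <- <-; auto| right; eauto].
Qed.

Lemma E_app_Mem (a b : nat -> option nat) :
  forall n, Mem (AppF a b) n <-> exists u, Mem a (cpair n u) /\ (forall i, inD i u -> Mem b i).
Proof.
  intros n. split.
  - intros H. destruct (Mem_cont _ _ H) as [L [HL HL']].
    destruct (agrees_AppF_r _ _ _ HL) as [Lb [Hb Hb']].
    exists (mku Lb). split.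
    + constructor.
      * destruct (Nat.testbit (mku Lb) 0) eqn:E; auto. apply mku_bit in E as [x [y [_ E]]].
        exfalso. symmetry in E. apply cpair_eq0 in E. lia.
      * apply HL'. apply Hb'. intros x y Hi.
        assert (tbit (mku Lb) x y = true) by (apply mku_bit; eauto).
        destruct (tab_exists _ _ _ H0) as [y' Hy'].
        pose proof Hy' as Hy''. apply tab_spec in Hy'' as [H1 _].
        apply mku_bit in H1 as [x1 [y1 [Hi1 E]]]. apply cpair_inj in E as [E _].
        apply cpair_inj in E as [<- <-]. rewrite Hy'. apply Hb in Hi. apply Hb in Hi1. congruence.
    + intros i Hi. unfold inD in Hi. apply mku_bit in Hi as [x [y [Hi ->]]].
      constructor. apply Hb; auto.
  - intros [u [H1 H2]]. inversion H1 as [c0 x0 y0 H0 E1 E2|c0 m u' Hu H0 E1 E2].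
    + apply cpair_inj in E2 as [_ E3]. subst u. exfalso. apply (Mem_not0 b). apply H2. reflexivity.
    + apply cpair_inj in E2 as [-> ->]. eapply Mem_mono; [exact H0|].
      apply AppF_mono; [intros q a0; auto|].
      intros z y Hz. apply tab_spec in Hz as [Hz _]. apply H2 in Hz. apply Mem_base_iff; auto.
Qed.

Opaque cfst csnd.
Definition unw (k n : nat) : nat := nat_rec (fun _ => nat -> nat) (fun n => n) (fun _ r n => r (cfst n)) k n.
Lemma unw0 n : unw 0 n = n. Proof. reflexivity. Qed.
Lemma unwS k n : unw (S k) n = unw k (cfst n). Proof. reflexivity. Qed.

Definition uu (j n : nat) := csnd (unw j n).

Fixpoint lev (c : nat -> option nat) (n j : nat) : nat -> option nat :=
  match j with 0 => c | S j' => AppF (lev c n j') (tab (uu j' n)) end.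

Lemma lev_shift c m u j : lev c (cpair m u) (S j) = lev (AppF c (tab u)) m j.
Proof.
  induction j; simpl.
  - unfold uu. rewrite unw0, csnd_pair. auto.
  - simpl in IHj. rewrite IHj. unfold uu. rewrite unwS, cfst_pair. auto.
Qed.

Lemma Mem_char c n : Mem c n <-> exists k x y, unw k n = cpair (cpair x y) 1 /\
   (forall j, j < k -> Nat.testbit (uu j n) 0 = false) /\ lev c n k x = Some y.
Proof.
  split.
  - induction 1.
    + exists 0, x, y. split; auto. split; auto. intros; lia.
    + destruct IHMem as [k [x [y [H1 [H2 H3]]]]]. exists (S k), x, y. split; [|split].
      * rewrite unwS, cfst_pair. auto.
      * intros j Hj. destruct j; unfold uu.
        -- rewrite unw0, csnd_pair. auto.
        -- rewrite unwS, cfst_pair. apply H2. lia.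
      * rewrite lev_shift. auto.
  - intros [k [x [y [H1 [H2 H3]]]]]. revert c n H1 H2 H3. induction k; intros c n H1 H2 H3.
    + rewrite unw0 in H1. subst n. constructor. auto.
    + destruct (cpair_surj n) as [m [u <-]]. constructor.
      * specialize (H2 0 ltac:(lia)). unfold uu in H2. rewrite unw0, csnd_pair in H2. auto.
      * rewrite lev_shift in H3. apply IHk; auto.
        -- rewrite unwS, cfst_pair in H1. auto.
        -- intros j Hj. specialize (H2 (S j) ltac:(lia)). unfold uu in *. rewrite unwS, cfst_pair in H2. auto.
Qed.

Definition jEV j c v y := cpair 1 (cpair j (cpair c (cpair v y))).
Definition jEVS j gl v ws := cpair 2 (cpair j (cpair gl (cpair v ws))).
Definition jMU j f v k := cpair 3 (cpair j (cpair f (cpair v k))).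
Definition jFACT j x y := cpair 4 (cpair j (cpair x y)).
Definition jISC c := cpair 5 c.
Definition jISCL gl := cpair 6 gl.

Definition EVok (n j c v y W : nat) (has : nat -> Prop) : Prop :=
  let ct := cfst c in let cd := csnd c in
  match ct with
  | 0 => cd = 0 /\ y = 0
  | 1 => cd = 0 /\ y = S (lhd v)
  | 2 => y = lnth cd v
  | 3 => has (jEVS j (csnd cd) v W) /\ has (jEV j (cfst cd) W y)
  | 4 => v <> 0 /\ (if lhd v =? 0 then has (jEV j (cfst cd) (ltl v) y) /\ has (jISC (csnd cd))
                   else has (jEV j c (S (cpair (pred (lhd v)) (ltl v))) W) /\
                        has (jEV j (csnd cd) (S (cpair (pred (lhd v)) (S (cpair W (ltl v))))) y))
  | 5 => has (jMU j cd v y) /\ has (jEV j cd (S (cpair y v)) 0)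
  | 6 => cd = 0 /\ j <> 0 /\
         (if Nat.odd (lhd v) then tbit (uu (pred j) n) (Nat.div2 (lhd v)) y = true /\
                                  (forall y', y' < y -> tbit (uu (pred j) n) (Nat.div2 (lhd v)) y' = false)
          else has (jFACT (pred j) (Nat.div2 (lhd v)) y))
  | _ => False
  end.

Definition EVSok (j gl v ws : nat) (has : nat -> Prop) : Prop :=
  if gl =? 0 then ws = 0 else ws <> 0 /\ has (jEV j (lhd gl) v (lhd ws)) /\ has (jEVS j (ltl gl) v (ltl ws)).

Definition MUok (j f v k W : nat) (has : nat -> Prop) : Prop :=
  if k =? 0 then True else W <> 0 /\ has (jMU j f v (pred k)) /\ has (jEV j f (S (cpair (pred k) v)) W).

Definition FACTok (ea j x y W : nat) (has : nat -> Prop) : Prop :=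
  if j =? 0 then has (jEV 0 ea (S (cpair x 0)) y)
  else has (jFACT (pred j) 0 W) /\ has (jEV j W (S (cpair x 0)) y).

Definition ISCok (c : nat) (has : nat -> Prop) : Prop :=
  match cfst c with
  | 0 | 1 | 6 => csnd c = 0
  | 2 => True
  | 3 => has (jISC (cfst (csnd c))) /\ has (jISCL (csnd (csnd c)))
  | 4 => has (jISC (cfst (csnd c))) /\ has (jISC (csnd (csnd c)))
  | 5 => has (jISC (csnd c))
  | _ => False
  end.

Definition ISCLok (gl : nat) (has : nat -> Prop) : Prop :=
  if gl =? 0 then True else has (jISC (lhd gl)) /\ has (jISCL (ltl gl)).

Definition okP (ea n E : nat) (has : nat -> Prop) : Prop :=
  let J := cfst E in let W := csnd E in let D := csnd J in
  match cfst J with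
  | 1 => EVok n (cfst D) (cfst (csnd D)) (cfst (csnd (csnd D))) (csnd (csnd (csnd D))) W has
  | 2 => EVSok (cfst D) (cfst (csnd D)) (cfst (csnd (csnd D))) (csnd (csnd (csnd D))) has
  | 3 => MUok (cfst D) (cfst (csnd D)) (cfst (csnd (csnd D))) (csnd (csnd (csnd D))) W has
  | 4 => FACTok ea (cfst D) (cfst (csnd D)) (csnd (csnd D)) W has
  | 5 => ISCok D has
  | 6 => ISCLok D has
  | _ => True
  end.

Lemma EVok_mono n j c v y W (h1 h2 : nat -> Prop) : (forall t, h1 t -> h2 t) -> EVok n j c v y W h1 -> EVok n j c v y W h2.
Proof.
  intros H. unfold EVok. destruct (cfst c) as [|[|[|[|[|[|[|]]]]]]]; auto.
  - intros [H1 H2]; split; auto.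
  - intros [H1 H2]; split; auto. destruct (lhd v =? 0); destruct H2; split; auto.
  - intros [H1 H2]; split; auto.
  - intros [H1 [H2 H3]]; split; auto; split; auto. destruct (Nat.odd _); auto.
Qed.

Lemma okP_mono ea n E (h1 h2 : nat -> Prop) : (forall t, h1 t -> h2 t) -> okP ea n E h1 -> okP ea n E h2.
Proof.
  intros H. unfold okP. cbv zeta.
  destruct (cfst (cfst E)) as [|[|[|[|[|[|[|]]]]]]]; auto.
  - apply EVok_mono; auto.
  - unfold EVSok. destruct (_ =? 0); auto. intros [H1 [H2 H3]]; auto.
  - unfold MUok. destruct (_ =? 0); auto. intros [H1 [H2 H3]]; auto.
  - unfold FACTok. destruct (_ =? 0); auto. intros [H1 H2]; auto.
  - unfold ISCok. destruct (cfst _) as [|[|[|[|[|[|[|]]]]]]]; auto; intros [H1 H2]; auto.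
  - unfold ISCLok. destruct (_ =? 0); auto. intros [H1 H2]; auto.
Qed.

Definition hasP (L : list nat) (i : nat) (t : nat) : Prop := exists p, p < i /\ cfst (nth p L 0) = t.
Definition validL ea n (L : list nat) : Prop := forall i, i < length L -> okP ea n (nth i L 0) (hasP L i).

Definition orc (a : nat -> option nat) (n j : nat) : nat -> option nat :=
  match j with 0 => empty_oracle | S j' => join (lev a n j') (tab (uu j' n)) end.

Definition SemJ (a : nat -> option nat) (ea n t : nat) : Prop :=
  (forall j c v y, t = jEV j c v y -> exists C, encode C = c /\ forall l, lc l = v -> eval (orc a n j) C l y) /\
  (forall j gl v ws, t = jEVS j gl v ws -> exists Gs, encl Gs = gl /\ forall l, lc l = v ->
       exists wl, lc wl = ws /\ evals (orc a n j) Gs l wl) /\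
  (forall j f v k, t = jMU j f v k -> forall F l, encode F = f -> lc l = v ->
       forall i, i < k -> exists z, z <> 0 /\ eval (orc a n j) F (i :: l) z) /\
  (forall j x y, t = jFACT j x y -> lev a n j x = Some y) /\
  (forall c, t = jISC c -> exists C, encode C = c) /\
  (forall gl, t = jISCL gl -> exists Gs, encl Gs = gl).

Opaque cfst csnd.

Lemma lc_surj v : exists l, lc l = v.
Proof.
  induction v as [v IH] using (well_founded_induction lt_wf).
  destruct v. exists []; auto.
  destruct (cpair_surj v) as [x [w <-]].
  destruct (IH w) as [l Hl]. pose proof (cpair_ge_r x w). lia.
  exists (x :: l). simpl. rewrite Hl. auto.
Qed.

Lemma lhd_nth l : lhd (lc l) = nth 0 l 0.
Proof. exact (lnth_lc 0 l). Qed.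

Lemma lc_nz l : lc l <> 0 -> exists h l0, l = h :: l0.
Proof. destruct l; simpl; [congruence| eauto]. Qed.

Lemma encode_rec_inv C f g : encode C = cpair 4 (cpair f g) -> exists F G, C = CRec F G /\ encode F = f /\ encode G = g.
Proof.
  intros H. destruct C; simpl in H; try rewrite encode_comp in H; apply cpair_inj in H as [H1 H2]; try discriminate.
  apply cpair_inj in H2 as [H2 H3]. eauto.
Qed.

Definition hasSem a ea n (has : nat -> Prop) := forall t, has t -> SemJ a ea n t.

Lemma hEV a ea n has j c v y : hasSem a ea n has -> has (jEV j c v y) ->
  exists C, encode C = c /\ forall l, lc l = v -> eval (orc a n j) C l y.
Proof. intros H1 H2. apply (proj1 (H1 _ H2)). auto. Qed.
Lemma hEVS a ea n has j gl v ws : hasSem a ea n has -> has (jEVS j gl v ws) ->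
  exists Gs, encl Gs = gl /\ forall l, lc l = v -> exists wl, lc wl = ws /\ evals (orc a n j) Gs l wl.
Proof. intros H1 H2. apply (proj1 (proj2 (H1 _ H2))). auto. Qed.
Lemma hMU a ea n has j f v k : hasSem a ea n has -> has (jMU j f v k) ->
  forall F l, encode F = f -> lc l = v -> forall i, i < k -> exists z, z <> 0 /\ eval (orc a n j) F (i :: l) z.
Proof. intros H1 H2. apply (proj1 (proj2 (proj2 (H1 _ H2)))). auto. Qed.
Lemma hFACT a ea n has j x y : hasSem a ea n has -> has (jFACT j x y) -> lev a n j x = Some y.
Proof. intros H1 H2. apply (proj1 (proj2 (proj2 (proj2 (H1 _ H2))))). auto. Qed.
Lemma hISC a ea n has c : hasSem a ea n has -> has (jISC c) -> exists C, encode C = c.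
Proof. intros H1 H2. apply (proj1 (proj2 (proj2 (proj2 (proj2 (H1 _ H2)))))). auto. Qed.
Lemma hISCL a ea n has gl : hasSem a ea n has -> has (jISCL gl) -> exists Gs, encl Gs = gl.
Proof. intros H1 H2. apply (proj2 (proj2 (proj2 (proj2 (proj2 (H1 _ H2)))))). auto. Qed.

Lemma EV_sound a ea n has j c v y W : hasSem a ea n has -> EVok n j c v y W has ->
  exists C, encode C = c /\ forall l, lc l = v -> eval (orc a n j) C l y.
Proof.
  intros HS H. destruct (cpair_surj c) as [ct [cd <-]]. unfold EVok in H.
  rewrite cfst_pair, csnd_pair in H.
  destruct ct as [|[|[|[|[|[|[|ct]]]]]]].
  - destruct H as [-> ->]. exists CZero. split; [reflexivity|]. intros; constructor.
  - destruct H as [-> ->]. exists CSucc. split; [reflexivity|]. intros l <-. rewrite lhd_nth. constructor.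
  - subst y. exists (CProj cd). split; [reflexivity|]. intros l <-. rewrite lnth_lc. constructor.
  - destruct (cpair_surj cd) as [f [gl <-]]. rewrite cfst_pair, csnd_pair in H. destruct H as [H1 H2].
    destruct (hEVS _ _ _ _ _ _ _ _ HS H1) as [Gs [HG HG']].
    destruct (hEV _ _ _ _ _ _ _ _ HS H2) as [F [HF HF']].
    exists (CComp F Gs). split. rewrite encode_comp; congruence.
    intros l Hl. destruct (HG' l Hl) as [wl [Hw Hw']]. econstructor; eauto.
  - destruct (cpair_surj cd) as [f [g <-]]. rewrite cfst_pair, csnd_pair in H. destruct H as [Hv H].
    destruct (Nat.eqb_spec (lhd v) 0) as [Hz|Hz].
    + destruct H as [H1 H2].
      destruct (hEV _ _ _ _ _ _ _ _ HS H1) as [F [HF HF']].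
      destruct (hISC _ _ _ _ _ HS H2) as [G HG].
      exists (CRec F G). split. simpl. congruence.
      intros l Hl. subst v. destruct (lc_nz _ Hv) as [h [l0 ->]].
      rewrite lhd_nth in Hz. simpl in Hz. subst h. constructor. apply HF'. rewrite ltl_lc. auto.
    + destruct H as [H1 H2].
      destruct (hEV _ _ _ _ _ _ _ _ HS H1) as [C0 [HC0 HC0']].
      destruct (hEV _ _ _ _ _ _ _ _ HS H2) as [G [HG HG']].
      destruct (encode_rec_inv _ _ _ HC0) as [F' [G' [-> [HF' HG'']]]].
      assert (G' = G) by (apply encode_inj; congruence). subst G'.
      exists (CRec F' G). split; auto.
      intros l Hl. subst v. destruct (lc_nz _ Hv) as [h [l0 ->]].
      rewrite lhd_nth in Hz. simpl in Hz. destruct h as [|k]; [congruence|].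
      rewrite lhd_nth in HC0', HG'. simpl in HC0', HG'. change (S (cpair (S k) (lc l0))) with (lc (S k :: l0)) in HC0', HG'. rewrite ltl_lc in HC0', HG'.
      eapply eRecS.
      * apply HC0'. reflexivity.
      * apply HG'. reflexivity.
  - destruct H as [H1 H2].
    destruct (hEV _ _ _ _ _ _ _ _ HS H2) as [F [HF HF']].
    exists (CMu F). split. simpl. congruence.
    intros l Hl. constructor.
    + apply HF'. simpl. congruence.
    + intros i Hi. eapply hMU; eauto.
  - destruct H as [-> [Hj H]]. exists COrc. split; [reflexivity|].
    intros l <-. constructor. destruct j as [|j']; [congruence|]. simpl.
    unfold join. rewrite lhd_nth in H. destruct (Nat.odd (nth 0 l 0)).
    + apply tab_spec. simpl in H. auto.
    + eapply hFACT; eauto.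
  - destruct H.
Qed.

Lemma EVS_sound a ea n has j gl v ws : hasSem a ea n has -> EVSok j gl v ws has ->
  exists Gs, encl Gs = gl /\ forall l, lc l = v -> exists wl, lc wl = ws /\ evals (orc a n j) Gs l wl.
Proof.
  intros HS H. unfold EVSok in H. destruct (Nat.eqb_spec gl 0) as [->|Hg].
  - subst ws. exists []. split; auto. intros l _. exists []. split; auto. constructor.
  - destruct H as [Hw [H1 H2]].
    destruct (hEV _ _ _ _ _ _ _ _ HS H1) as [G [HG HG']].
    destruct (hEVS _ _ _ _ _ _ _ _ HS H2) as [Gs [HGs HGs']].
    exists (G :: Gs). split.
    + simpl. rewrite HG, HGs. destruct gl; [congruence|]. unfold lhd, ltl. simpl.
      rewrite cpair_fst_snd. auto.
    + intros l Hl. destruct (HGs' l Hl) as [wl [Hwl Hwl']].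
      exists (lhd ws :: wl). split.
      * simpl. rewrite Hwl. destruct ws; [congruence|]. unfold lhd, ltl. simpl. rewrite cpair_fst_snd. auto.
      * constructor; auto.
Qed.

Lemma MU_sound a ea n has j f v k W : hasSem a ea n has -> MUok j f v k W has ->
  forall F l, encode F = f -> lc l = v -> forall i, i < k -> exists z, z <> 0 /\ eval (orc a n j) F (i :: l) z.
Proof.
  intros HS H F l HF Hl i Hi. unfold MUok in H. destruct (Nat.eqb_spec k 0) as [->|Hk]; [lia|].
  destruct H as [HW [H1 H2]].
  destruct (Nat.eq_dec i (pred k)).
  - subst i. destruct (hEV _ _ _ _ _ _ _ _ HS H2) as [F' [HF' HF'']].
    assert (F' = F) by (apply encode_inj; congruence). subst F'.
    exists W. split; auto. apply HF''. simpl. congruence.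
  - eapply hMU; eauto. lia.
Qed.

Lemma FACT_sound a ea n has j x y W : (forall x y, a x = Some y <-> phi ea x y) ->
  hasSem a ea n has -> FACTok ea j x y W has -> lev a n j x = Some y.
Proof.
  intros Ha HS H. unfold FACTok in H. destruct (Nat.eqb_spec j 0) as [->|Hj].
  - destruct (hEV _ _ _ _ _ _ _ _ HS H) as [C [HC HC']]. simpl. apply Ha.
    exists C. split; auto.
  - destruct H as [H1 H2]. destruct j as [|j']; [congruence|]. simpl pred in H1.
    pose proof (hFACT _ _ _ _ _ _ _ HS H1) as He.
    destruct (hEV _ _ _ _ _ _ _ _ HS H2) as [C [HC HC']].
    simpl. apply AppF_spec. exists W. split; auto. exists C. split; auto.
Qed.

Lemma ISC_sound a ea n has c : hasSem a ea n has -> ISCok c has -> exists C, encode C = c.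
Proof.
  intros HS H. destruct (cpair_surj c) as [ct [cd <-]]. unfold ISCok in H.
  rewrite cfst_pair, csnd_pair in H.
  destruct ct as [|[|[|[|[|[|[|ct]]]]]]].
  - subst. exists CZero. reflexivity.
  - subst. exists CSucc. reflexivity.
  - exists (CProj cd). reflexivity.
  - destruct (cpair_surj cd) as [f [gl <-]]. rewrite cfst_pair, csnd_pair in H. destruct H as [H1 H2].
    destruct (hISC _ _ _ _ _ HS H1) as [F HF]. destruct (hISCL _ _ _ _ _ HS H2) as [Gs HGs].
    exists (CComp F Gs). rewrite encode_comp. congruence.
  - destruct (cpair_surj cd) as [f [g <-]]. rewrite cfst_pair, csnd_pair in H. destruct H as [H1 H2].
    destruct (hISC _ _ _ _ _ HS H1) as [F HF]. destruct (hISC _ _ _ _ _ HS H2) as [G HG].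
    exists (CRec F G). simpl. congruence.
  - destruct (hISC _ _ _ _ _ HS H) as [F HF]. exists (CMu F). simpl. congruence.
  - subst. exists COrc. reflexivity.
  - destruct H.
Qed.

Lemma ISCL_sound a ea n has gl : hasSem a ea n has -> ISCLok gl has -> exists Gs, encl Gs = gl.
Proof.
  intros HS H. unfold ISCLok in H. destruct (Nat.eqb_spec gl 0) as [->|Hg].
  - exists []. auto.
  - destruct H as [H1 H2]. destruct (hISC _ _ _ _ _ HS H1) as [G HG]. destruct (hISCL _ _ _ _ _ HS H2) as [Gs HGs].
    exists (G :: Gs). simpl. rewrite HG, HGs. destruct gl; [congruence|]. unfold lhd, ltl. simpl.
    rewrite cpair_fst_snd. auto.
Qed.

Lemma okP_sound a ea n E has : (forall x y, a x = Some y <-> phi ea x y) ->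
  hasSem a ea n has -> okP ea n E has -> SemJ a ea n (cfst E).
Proof.
  intros Ha HS H. unfold okP in H. cbv zeta in H.
  split; [|split; [|split; [|split; [|split]]]].
  - intros j c v y HJ. rewrite HJ in H. unfold jEV in H. repeat rewrite ?cfst_pair, ?csnd_pair in H.
    eapply EV_sound; eauto.
  - intros j gl v ws HJ. rewrite HJ in H. unfold jEVS in H. repeat rewrite ?cfst_pair, ?csnd_pair in H.
    eapply EVS_sound; eauto.
  - intros j f v k HJ. rewrite HJ in H. unfold jMU in H. repeat rewrite ?cfst_pair, ?csnd_pair in H.
    eapply MU_sound; eauto.
  - intros j x y HJ. rewrite HJ in H. unfold jFACT in H. repeat rewrite ?cfst_pair, ?csnd_pair in H.
    eapply FACT_sound; eauto.
  - intros c HJ. rewrite HJ in H. unfold jISC in H. repeat rewrite ?cfst_pair, ?csnd_pair in H.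
    eapply ISC_sound; eauto.
  - intros gl HJ. rewrite HJ in H. unfold jISCL in H. repeat rewrite ?cfst_pair, ?csnd_pair in H.
    eapply ISCL_sound; eauto.
Qed.

Lemma soundness a ea n L : (forall x y, a x = Some y <-> phi ea x y) ->
  (forall i, okP ea n (nth i L 0) (hasP L i)) -> forall i, SemJ a ea n (cfst (nth i L 0)).
Proof.
  intros Ha HV i. induction i as [i IH] using (well_founded_induction lt_wf).
  apply (okP_sound _ _ _ _ (hasP L i) Ha); auto.
  intros t [p [Hp <-]]. apply IH; auto.
Qed.

Opaque cfst csnd.

Definition contains (L : list nat) (t : nat) := exists p, p < length L /\ cfst (nth p L 0) = t.

Lemma valid_app ea n L1 L2 : validL ea n L1 -> validL ea n L2 -> validL ea n (L1 ++ L2).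
Proof.
  intros H1 H2 i Hi. rewrite length_app in Hi.
  destruct (lt_dec i (length L1)).
  - rewrite app_nth1 by auto. eapply okP_mono; [|apply H1; auto].
    intros t [p [Hp Ht]]. exists p. split; auto. rewrite app_nth1 by lia. auto.
  - rewrite app_nth2 by lia. eapply okP_mono; [|apply H2; lia].
    intros t [p [Hp Ht]]. exists (length L1 + p). split; [lia|]. rewrite app_nth2 by lia.
    replace (length L1 + p - length L1) with p by lia. auto.
Qed.

Lemma contains_app_l L1 L2 t : contains L1 t -> contains (L1 ++ L2) t.
Proof. intros [p [Hp Ht]]. exists p. rewrite length_app, app_nth1 by auto. split; auto; lia. Qed.
Lemma contains_app_r L1 L2 t : contains L2 t -> contains (L1 ++ L2) t.
Proof. intros [p [Hp Ht]]. exists (length L1 + p). rewrite length_app, app_nth2 by lia.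
  replace (length L1 + p - length L1) with p by lia. split; auto; lia. Qed.

Lemma add_entry ea n L E : validL ea n L -> okP ea n E (contains L) ->
  validL ea n (L ++ [E]) /\ contains (L ++ [E]) (cfst E).
Proof.
  intros HV HE. split.
  - intros i Hi. rewrite length_app in Hi. simpl in Hi.
    destruct (lt_dec i (length L)).
    + rewrite app_nth1 by auto. eapply okP_mono; [|apply HV; auto].
      intros t [p [Hp Ht]]. exists p. split; auto. rewrite app_nth1 by lia. auto.
    + assert (i = length L) by lia. subst i. rewrite app_nth2 by lia. rewrite Nat.sub_diag. simpl.
      eapply okP_mono; [|exact HE]. intros t [p [Hp Ht]]. exists p. split; auto.
      rewrite app_nth1 by lia. auto.
  - exists (length L). rewrite length_app, app_nth2 by lia. rewrite Nat.sub_diag. simpl. split; auto; lia.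
Qed.

Fixpoint code_ind2 (P : code -> Prop) (HZ : P CZero) (HS : P CSucc) (HP : forall i, P (CProj i))
  (HC : forall f gs, P f -> Forall P gs -> P (CComp f gs))
  (HR : forall f g, P f -> P g -> P (CRec f g)) (HM : forall f, P f -> P (CMu f)) (HO : P COrc)
  (c : code) {struct c} : P c :=
  match c with
  | CZero => HZ
  | CSucc => HS
  | CProj i => HP i
  | CComp f gs => HC f gs (code_ind2 P HZ HS HP HC HR HM HO f)
      ((fix F (l : list code) : Forall P l :=
          match l with [] => Forall_nil _ | g :: l' => Forall_cons _ (code_ind2 P HZ HS HP HC HR HM HO g) (F l') end) gs)
  | CRec f g => HR f g (code_ind2 P HZ HS HP HC HR HM HO f) (code_ind2 P HZ HS HP HC HR HM HO g)
  | CMu f => HM f (code_ind2 P HZ HS HP HC HR HM HO f)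
  | COrc => HO
  end.

Ltac simpcp := repeat rewrite ?cfst_pair, ?csnd_pair.

Lemma okP_ISC ea n c W has : ISCok c has -> okP ea n (cpair (jISC c) W) has.
Proof. intros H. unfold okP, jISC. cbv zeta. simpcp. exact H. Qed.
Lemma okP_ISCL ea n gl W has : ISCLok gl has -> okP ea n (cpair (jISCL gl) W) has.
Proof. intros H. unfold okP, jISCL. cbv zeta. simpcp. exact H. Qed.
Lemma okP_EV ea n j c v y W has : EVok n j c v y W has -> okP ea n (cpair (jEV j c v y) W) has.
Proof. intros H. unfold okP, jEV. cbv zeta. simpcp. exact H. Qed.
Lemma okP_EVS ea n j gl v ws W has : EVSok j gl v ws has -> okP ea n (cpair (jEVS j gl v ws) W) has.
Proof. intros H. unfold okP, jEVS. cbv zeta. simpcp. exact H. Qed.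
Lemma okP_MU ea n j f v k W has : MUok j f v k W has -> okP ea n (cpair (jMU j f v k) W) has.
Proof. intros H. unfold okP, jMU. cbv zeta. simpcp. exact H. Qed.
Lemma okP_FACT ea n j x y W has : FACTok ea j x y W has -> okP ea n (cpair (jFACT j x y) W) has.
Proof. intros H. unfold okP, jFACT. cbv zeta. simpcp. exact H. Qed.

Lemma add0 ea n J W : okP ea n (cpair J W) (contains []) -> exists L, validL ea n L /\ contains L J.
Proof.
  intros H. destruct (add_entry ea n [] _ (fun i Hi => ltac:(simpl in Hi; lia)) H) as [H1 H2].
  rewrite cfst_pair in H2. eauto.
Qed.

Lemma add1 ea n L1 t1 J W : validL ea n L1 -> contains L1 t1 ->
  (forall has : nat -> Prop, has t1 -> okP ea n (cpair J W) has) -> exists L, validL ea n L /\ contains L J.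
Proof.
  intros V1 C1 H. destruct (add_entry ea n L1 (cpair J W) V1 (H _ C1)) as [H1 H2].
  rewrite cfst_pair in H2. eauto.
Qed.

Lemma add2 ea n L1 L2 t1 t2 J W : validL ea n L1 -> contains L1 t1 -> validL ea n L2 -> contains L2 t2 ->
  (forall has : nat -> Prop, has t1 -> has t2 -> okP ea n (cpair J W) has) -> exists L, validL ea n L /\ contains L J.
Proof.
  intros V1 C1 V2 C2 H.
  destruct (add_entry ea n (L1 ++ L2) (cpair J W) (valid_app _ _ _ _ V1 V2)
     (H _ (contains_app_l _ _ _ C1) (contains_app_r _ _ _ C2))) as [H1 H2].
  rewrite cfst_pair in H2. eauto.
Qed.

Lemma C_ISC ea n C : exists L, validL ea n L /\ contains L (jISC (encode C)).
Proof.
  induction C as [| | i | f gs IHf H | f g IHf IHg | f IHf | ] using code_ind2.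
  - apply (add0 _ _ _ 0). apply okP_ISC. unfold ISCok. simpl encode. simpcp. auto.
  - apply (add0 _ _ _ 0). apply okP_ISC. unfold ISCok. simpl encode. simpcp. auto.
  - apply (add0 _ _ _ 0). apply okP_ISC. unfold ISCok. simpl encode. simpcp. auto.
  - assert (HL : exists L, validL ea n L /\ contains L (jISCL (encl gs))).
    { induction H as [|g gs Hg Hgs IH].
      - apply (add0 _ _ _ 0). apply okP_ISCL. unfold ISCLok. simpl. auto.
      - destruct Hg as [L1 [V1 C1]]. destruct IH as [L2 [V2 C2]].
        eapply (add2 _ _ _ _ _ _ _ 0 V1 C1 V2 C2). intros has h1 h2. apply okP_ISCL. unfold ISCLok.
        simpl encl. unfold lhd, ltl. simpl pred. simpcp. simpl. auto. }
    destruct IHf as [L1 [V1 C1]]. destruct HL as [L2 [V2 C2]].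
    eapply (add2 _ _ _ _ _ _ _ 0 V1 C1 V2 C2). intros has h1 h2. apply okP_ISC. unfold ISCok.
    rewrite encode_comp. simpcp. auto.
  - destruct IHf as [L1 [V1 C1]]. destruct IHg as [L2 [V2 C2]].
    eapply (add2 _ _ _ _ _ _ _ 0 V1 C1 V2 C2). intros has h1 h2. apply okP_ISC. unfold ISCok.
    simpl encode. simpcp. auto.
  - destruct IHf as [L1 [V1 C1]].
    eapply (add1 _ _ _ _ _ 0 V1 C1). intros has h1. apply okP_ISC. unfold ISCok.
    simpl encode. simpcp. auto.
  - apply (add0 _ _ _ 0). apply okP_ISC. unfold ISCok. simpl encode. simpcp. auto.
Qed.

Fixpoint C_EV a ea n j (HF : forall x y, j <> 0 -> lev a n (pred j) x = Some y ->
    exists L, validL ea n L /\ contains L (jFACT (pred j) x y))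
  C l y (H : eval (orc a n j) C l y) {struct H} :
  exists L, validL ea n L /\ contains L (jEV j (encode C) (lc l) y)
with C_EVS a ea n j (HF : forall x y, j <> 0 -> lev a n (pred j) x = Some y ->
    exists L, validL ea n L /\ contains L (jFACT (pred j) x y))
  Gs l ws (H : evals (orc a n j) Gs l ws) {struct H} :
  exists L, validL ea n L /\ contains L (jEVS j (encl Gs) (lc l) (lc ws)).
Proof.
  - destruct H.
    + apply (add0 _ _ _ 0). apply okP_EV. unfold EVok. simpl encode. simpcp. auto.
    + apply (add0 _ _ _ 0). apply okP_EV. unfold EVok. simpl encode. simpcp. rewrite lhd_nth. auto.
    + apply (add0 _ _ _ 0). apply okP_EV. unfold EVok. simpl encode. simpcp. rewrite lnth_lc. auto.
    + destruct (C_EVS _ _ _ _ HF _ _ _ H) as [L1 [V1 C1]].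
      destruct (C_EV _ _ _ _ HF _ _ _ H0) as [L2 [V2 C2]].
      eapply (add2 _ _ _ _ _ _ _ (lc ws) V1 C1 V2 C2). intros has h1 h2. apply okP_EV. unfold EVok.
      rewrite encode_comp. simpcp. auto.
    + destruct (C_EV _ _ _ _ HF _ _ _ H) as [L1 [V1 C1]].
      destruct (C_ISC ea n g) as [L2 [V2 C2]].
      eapply (add2 _ _ _ _ _ _ _ 0 V1 C1 V2 C2). intros has h1 h2. apply okP_EV. unfold EVok.
      simpl encode. simpcp. split; [simpl; discriminate|].
      rewrite lhd_nth. simpl nth. simpl Nat.eqb. rewrite ltl_lc. auto.
    + destruct (C_EV _ _ _ _ HF _ _ _ H) as [L1 [V1 C1]].
      destruct (C_EV _ _ _ _ HF _ _ _ H0) as [L2 [V2 C2]].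
      eapply (add2 _ _ _ _ _ _ _ z V1 C1 V2 C2). intros has h1 h2. apply okP_EV. unfold EVok.
      simpl encode. simpcp. split; [simpl; discriminate|].
      rewrite lhd_nth. simpl nth. simpl Nat.eqb. rewrite ltl_lc. simpl pred. split; [exact h1| exact h2].
    + assert (Hch : forall i, i <= k -> exists L, validL ea n L /\ contains L (jMU j (encode f) (lc v) i)).
      { induction i; intros Hi.
        - apply (add0 _ _ _ 0). apply okP_MU. unfold MUok. simpl. auto.
        - destruct IHi as [L1 [V1 C1]]; [lia|].
          destruct (H0 i ltac:(lia)) as [z [Hz Hz']].
          destruct (C_EV _ _ _ _ HF _ _ _ Hz') as [L2 [V2 C2]].
          eapply (add2 _ _ _ _ _ _ _ z V1 C1 V2 C2). intros has h1 h2. apply okP_MU. unfold MUok.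
          simpl Nat.eqb. cbv iota. simpl pred. split; auto. }
      destruct (Hch k (le_n _)) as [L1 [V1 C1]].
      destruct (C_EV _ _ _ _ HF _ _ _ H) as [L2 [V2 C2]].
      eapply (add2 _ _ _ _ _ _ _ 0 V1 C1 V2 C2). intros has h1 h2. apply okP_EV. unfold EVok.
      simpl encode. simpcp. split; [exact h1|exact h2].
    + destruct j as [|j']; [discriminate|]. unfold orc, join in H.
      destruct (Nat.odd (nth 0 v 0)) eqn:Eq.
      * apply tab_spec in H as [Hb1 Hb2].
        apply (add0 _ _ _ 0). apply okP_EV. unfold EVok. simpl encode. simpcp.
        rewrite lhd_nth, Eq. simpl pred. repeat split; auto.
      * destruct (HF _ _ ltac:(discriminate) H) as [L1 [V1 C1]].
        eapply (add1 _ _ _ _ _ 0 V1 C1). intros has h1. apply okP_EV. unfold EVok. simpl encode. simpcp.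
        rewrite lhd_nth, Eq. simpl pred. repeat split; auto.
  - destruct H.
    + apply (add0 _ _ _ 0). apply okP_EVS. unfold EVSok. simpl. auto.
    + destruct (C_EV _ _ _ _ HF _ _ _ H) as [L1 [V1 C1]].
      destruct (C_EVS _ _ _ _ HF _ _ _ H0) as [L2 [V2 C2]].
      eapply (add2 _ _ _ _ _ _ _ 0 V1 C1 V2 C2). intros has h1 h2. apply okP_EVS. unfold EVSok.
      simpl encl. simpl lc. simpl Nat.eqb. cbv iota. unfold lhd, ltl. simpl pred. simpcp.
      split; [discriminate| split; auto].
Qed.

Lemma C_FACT a ea n (Ha : forall x y, a x = Some y <-> phi ea x y) :
  forall j x y, lev a n j x = Some y -> exists L, validL ea n L /\ contains L (jFACT j x y).
Proof.
  induction j; intros x y H.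
  - simpl in H. apply Ha in H. destruct H as [C [HC HE]].
    assert (HF : forall x y, 0 <> 0 -> lev a n (pred 0) x = Some y ->
        exists L, validL ea n L /\ contains L (jFACT (pred 0) x y)) by (intros; congruence).
    destruct (C_EV a ea n 0 HF C [x] y HE) as [L1 [V1 C1]].
    eapply (add1 _ _ _ _ _ 0 V1 C1). intros has h1. apply okP_FACT. unfold FACTok. simpl Nat.eqb.
    cbv iota. rewrite <- HC. exact h1.
  - simpl in H. apply AppF_spec in H. destruct H as [e [He [C [HC HE]]]].
    destruct (IHj _ _ He) as [L1 [V1 C1]].
    assert (HF : forall x y, S j <> 0 -> lev a n (pred (S j)) x = Some y ->
        exists L, validL ea n L /\ contains L (jFACT (pred (S j)) x y)) by (intros; apply IHj; auto).
    destruct (C_EV a ea n (S j) HF C [x] y HE) as [L2 [V2 C2]].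
    eapply (add2 _ _ _ _ _ _ _ e V1 C1 V2 C2). intros has h1 h2. apply okP_FACT. unfold FACTok.
    simpl Nat.eqb. cbv iota. simpl pred. rewrite HC in h2. split; auto.
Qed.

Opaque cfst csnd.

Definition Eqb a b := Ifz (Add (Sub a b) (Sub b a)) Zero (Const 1).
Arguments Eqb : simpl never.
Lemma den_Eqb a b env : den (Eqb a b) env = if den a env =? den b env then 0 else 1.
Proof.
  unfold Eqb. rewrite den_Ifz, den_Add, !den_Sub, den_Const, den_Zero.
  destruct (Nat.eqb_spec (den a env) (den b env)).
  - replace (den a env - den b env + (den b env - den a env)) with 0 by lia. auto.
  - destruct (den a env - den b env + (den b env - den a env)) eqn:E; [lia|auto].
Qed.

Definition Nz p := Ifz p (Const 1) Zero.
Arguments Nz : simpl never.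
Lemma den_Nz p env : den (Nz p) env = if den p env =? 0 then 1 else 0.
Proof. unfold Nz. rewrite den_Ifz, den_Const, den_Zero. auto. Qed.

Definition hasF := BEx (Eqb (Fst (Lnth (Var 0) (Var 1))) (Var 2)) (Var 0) [Var 1; Var 2].  (* [i; L; t] *)
Definition hasN i L t := den hasF [i; L; t].
Lemma hasN_spec i L t : hasN i L t = 0 <-> exists p, p < i /\ cfst (lnth p L) = t.
Proof.
  unfold hasN, hasF. rewrite den_BEx. cbn -[Eqb Fst Lnth].
  split; intros [p [Hp H]]; exists p; split; auto.
  - rewrite den_Eqb, den_Fst, den_Lnth in H. cbn in H. destruct (Nat.eqb_spec (cfst (lnth p L)) t); auto; discriminate.
  - rewrite den_Eqb, den_Fst, den_Lnth. cbn. rewrite H, Nat.eqb_refl. auto.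
Qed.

Definition Has t := Comp hasF [Var 0; Var 3; t].
Arguments Has : simpl never.
Lemma den_Has t env : den (Has t) env = hasN (nth 0 env 0) (nth 3 env 0) (den t env).
Proof. reflexivity. Qed.

Definition tlP := Eqb (Tb (Var 1) (Pair (Pair (Var 2) (Var 0)) (Const 1))) Zero.  (* [y'; u; z] *)
Definition tlF := BAll tlP (Var 2) [Var 0; Var 1].   (* [u; z; y] *)
Definition TabL u z y := Comp tlF [u; z; y].
Arguments TabL : simpl never.
Lemma den_TabL u z y env : den (TabL u z y) env = 0 <->
  forall y', y' < den y env -> tbit (den u env) (den z env) y' = false.
Proof.
  unfold TabL, tlF. rewrite den_Comp, den_BAll. cbn -[tlP]. unfold tlP.
  split; intros H y' Hy'; specialize (H y' Hy').
  - rewrite den_Eqb, den_Tb, !den_Pair, den_Const in H. cbn in H. unfold tbit.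
    destruct (Nat.testbit _ _); simpl in H; auto; discriminate.
  - rewrite den_Eqb, den_Tb, !den_Pair, den_Const. cbn. unfold tbit in H. rewrite H. auto.
Qed.

Definition unwF := Rec (Var 0) (Var 1) (Fst (Var 1)).  (* [k; w] *)
Definition Uu k := Snd (Comp unwF [k; Var 2]).
Arguments Uu : simpl never.
Lemma unw_iter k n : unw k n = nat_rec (fun _ => nat) n (fun _ z => cfst z) k.
Proof.
  revert n. induction k; intros n; auto. rewrite unwS, IHk. simpl. clear IHk.
  induction k; simpl; auto.
Qed.
Lemma den_Uu k env : den (Uu k) env = uu (den k env) (nth 2 env 0).
Proof.
  unfold Uu, uu. rewrite den_Snd, den_Comp. f_equal. unfold unwF. cbn -[Fst].
  rewrite unw_iter. apply nat_rec_ext. intros. rewrite den_Fst. reflexivity.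
Qed.

Definition Hd w := Lnth (Const 0) w.
Definition Tl w := Snd (Pred w).
Arguments Hd : simpl never.
Arguments Tl : simpl never.
Lemma den_Hd w env : den (Hd w) env = lhd (den w env).
Proof. unfold Hd. rewrite den_Lnth, den_Const. reflexivity. Qed.
Lemma den_Tl w env : den (Tl w) env = ltl (den w env).
Proof. unfold Tl. rewrite den_Snd, den_Pred. reflexivity. Qed.

Definition P4 t a b c d := Pair (Const t) (Pair a (Pair b (Pair c d))).
Definition jEVe j c v y := P4 1 j c v y.
Definition jEVSe j gl v ws := P4 2 j gl v ws.
Definition jMUe j f v k := P4 3 j f v k.
Definition jFACTe j x y := Pair (Const 4) (Pair j (Pair x y)).
Definition jISCe c := Pair (Const 5) c.
Definition jISCLe gl := Pair (Const 6) gl.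
Lemma den_jEVe j c v y env : den (jEVe j c v y) env = jEV (den j env) (den c env) (den v env) (den y env).
Proof. unfold jEVe, P4. rewrite !den_Pair, den_Const. reflexivity. Qed.
Lemma den_jEVSe j c v y env : den (jEVSe j c v y) env = jEVS (den j env) (den c env) (den v env) (den y env).
Proof. unfold jEVSe, P4. rewrite !den_Pair, den_Const. reflexivity. Qed.
Lemma den_jMUe j c v y env : den (jMUe j c v y) env = jMU (den j env) (den c env) (den v env) (den y env).
Proof. unfold jMUe, P4. rewrite !den_Pair, den_Const. reflexivity. Qed.
Lemma den_jFACTe j x y env : den (jFACTe j x y) env = jFACT (den j env) (den x env) (den y env).
Proof. unfold jFACTe. rewrite !den_Pair, den_Const. reflexivity. Qed.
Lemma den_jISCe c env : den (jISCe c) env = jISC (den c env).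
Proof. unfold jISCe. rewrite !den_Pair, den_Const. reflexivity. Qed.
Lemma den_jISCLe c env : den (jISCLe c) env = jISCL (den c env).
Proof. unfold jISCLe. rewrite !den_Pair, den_Const. reflexivity. Qed.

Definition AddE := Add.
Lemma if01 (b : bool) : ((if b then 0 else 1) =? 0) = b. Proof. destruct b; auto. Qed.
Lemma if10 p : ((if p =? 0 then 1 else 0) =? 0) = negb (p =? 0). Proof. destruct (p =? 0); auto. Qed.
Lemma b2n0 b : (Nat.b2n b =? 0) = negb b. Proof. destruct b; auto. Qed.
Lemma b2n1 b : (Nat.b2n b =? 1) = b. Proof. destruct b; auto. Qed.
Lemma add01 (b : bool) x : (if b then 0 else 1) + x = 0 <-> b = true /\ x = 0.
Proof. destruct b; simpl; intuition; discriminate. Qed.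
Ltac bcases := repeat (match goal with
  | |- context [?a =? ?b] => destruct (Nat.eqb_spec a b)
  | |- context [Nat.odd ?x] => destruct (Nat.odd x)
  | |- context [Nat.testbit ?x ?y] => destruct (Nat.testbit x y)
  end; cbn [negb]).
Definition chkEV (j c v y W : exp) : exp :=
  let ct := Fst c in let cd := Snd c in
  Ifz (Eqb ct (Const 0)) (AddE (Eqb cd Zero) (Eqb y Zero))
  (Ifz (Eqb ct (Const 1)) (AddE (Eqb cd Zero) (Eqb y (Succ (Hd v))))
  (Ifz (Eqb ct (Const 2)) (Eqb y (Lnth cd v))
  (Ifz (Eqb ct (Const 3)) (AddE (Has (jEVSe j (Snd cd) v W)) (Has (jEVe j (Fst cd) W y)))
  (Ifz (Eqb ct (Const 4)) (AddE (Nz (Eqb v Zero))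
      (Ifz (Eqb (Hd v) Zero) (AddE (Has (jEVe j (Fst cd) (Tl v) y)) (Has (jISCe (Snd cd))))
         (AddE (Has (jEVe j c (Cons (Pred (Hd v)) (Tl v)) W))
               (Has (jEVe j (Snd cd) (Cons (Pred (Hd v)) (Cons W (Tl v))) y)))))
  (Ifz (Eqb ct (Const 5)) (AddE (Has (jMUe j cd v y)) (Has (jEVe j cd (Cons y v) Zero)))
  (Ifz (Eqb ct (Const 6)) (AddE (Eqb cd Zero) (AddE (Nz (Eqb j Zero))
      (Ifz (Odd (Hd v)) (Has (jFACTe (Pred j) (Div2 (Hd v)) y))
         (AddE (Eqb (Tb (Uu (Pred j)) (Pair (Pair (Div2 (Hd v)) y) (Const 1))) (Const 1))
               (TabL (Uu (Pred j)) (Div2 (Hd v)) y)))))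
  (Const 1))))))).

Ltac dnorm := repeat (rewrite ?den_Ifz, ?den_Eqb, ?den_Const, ?den_Zero, ?den_Succ, ?den_Pred,
  ?den_Fst, ?den_Snd, ?den_Hd, ?den_Tl, ?den_Lnth, ?den_Has, ?den_jEVe, ?den_jEVSe, ?den_jMUe,
  ?den_jFACTe, ?den_jISCe, ?den_jISCLe, ?den_Nz, ?den_Odd, ?den_Div2, ?den_Tb, ?den_Pair, ?den_Cons,
  ?den_Uu, ?den_Var, ?den_Add).

Lemma den_chkEV i ea n L j c v y W :
  den (chkEV j c v y W) [i; ea; n; L] = 0 <->
  EVok n (den j [i; ea; n; L]) (den c [i; ea; n; L]) (den v [i; ea; n; L]) (den y [i; ea; n; L]) (den W [i; ea; n; L]) (fun t => hasN i L t = 0).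
Proof.
  unfold chkEV, AddE. cbv zeta. dnorm.
  unfold EVok. cbn [nth].
  destruct (cfst (den c _)) as [|[|[|[|[|[|[|ct]]]]]]]; cbn [Nat.eqb].
  all: rewrite ?if01, ?if10, ?b2n0, ?b2n1.
  all: unfold tbit.
  all: bcases.
  all: rewrite ?Nat.add_0_l, ?Nat.eq_add_0.
  all: try rewrite den_TabL; dnorm; cbn [nth]; unfold tbit.
  all: try (split; intros; intuition (try lia; try discriminate)).
  all: eauto.
Qed.

Definition chkEVS (j gl v ws : exp) : exp :=
  Ifz (Eqb gl Zero) (Eqb ws Zero)
    (AddE (Nz (Eqb ws Zero)) (AddE (Has (jEVe j (Hd gl) v (Hd ws))) (Has (jEVSe j (Tl gl) v (Tl ws))))).
Lemma den_chkEVS i ea n L j gl v ws :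
  den (chkEVS j gl v ws) [i; ea; n; L] = 0 <->
  EVSok (den j [i; ea; n; L]) (den gl [i; ea; n; L]) (den v [i; ea; n; L]) (den ws [i; ea; n; L]) (fun t => hasN i L t = 0).
Proof.
  unfold chkEVS, AddE. dnorm. unfold EVSok. cbn [nth].
  rewrite ?if01, ?if10, ?b2n0, ?b2n1. bcases.
  all: rewrite ?Nat.add_0_l, ?Nat.eq_add_0.
  all: try (split; intros; intuition (try lia; try discriminate)).
Qed.

Definition chkMU (j f v k W : exp) : exp :=
  Ifz (Eqb k Zero) Zero
    (AddE (Nz (Eqb W Zero)) (AddE (Has (jMUe j f v (Pred k))) (Has (jEVe j f (Cons (Pred k) v) W)))).
Lemma den_chkMU i ea n L j f v k W :
  den (chkMU j f v k W) [i; ea; n; L] = 0 <->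
  MUok (den j [i; ea; n; L]) (den f [i; ea; n; L]) (den v [i; ea; n; L]) (den k [i; ea; n; L]) (den W [i; ea; n; L]) (fun t => hasN i L t = 0).
Proof.
  unfold chkMU, AddE. dnorm. unfold MUok. cbn [nth].
  rewrite ?if01, ?if10, ?b2n0, ?b2n1. bcases.
  all: rewrite ?Nat.add_0_l, ?Nat.eq_add_0.
  all: try (split; intros; intuition (try lia; try discriminate)).
Qed.

Definition chkFACT (j x y W : exp) : exp :=
  Ifz (Eqb j Zero) (Has (jEVe Zero (Var 1) (Cons x Zero) y))
    (AddE (Has (jFACTe (Pred j) Zero W)) (Has (jEVe j W (Cons x Zero) y))).
Lemma den_chkFACT i ea n L j x y W :
  den (chkFACT j x y W) [i; ea; n; L] = 0 <->
  FACTok ea (den j [i; ea; n; L]) (den x [i; ea; n; L]) (den y [i; ea; n; L]) (den W [i; ea; n; L]) (fun t => hasN i L t = 0).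
Proof.
  unfold chkFACT, AddE. dnorm. unfold FACTok. cbn [nth].
  rewrite ?if01, ?if10, ?b2n0, ?b2n1. bcases.
  all: rewrite ?Nat.add_0_l, ?Nat.eq_add_0.
  all: try (split; intros; intuition (try lia; try discriminate)).
Qed.

Definition chkISC (c : exp) : exp :=
  let ct := Fst c in let cd := Snd c in
  Ifz (Eqb ct (Const 0)) (Eqb cd Zero)
  (Ifz (Eqb ct (Const 1)) (Eqb cd Zero)
  (Ifz (Eqb ct (Const 2)) Zero
  (Ifz (Eqb ct (Const 3)) (AddE (Has (jISCe (Fst cd))) (Has (jISCLe (Snd cd))))
  (Ifz (Eqb ct (Const 4)) (AddE (Has (jISCe (Fst cd))) (Has (jISCe (Snd cd))))
  (Ifz (Eqb ct (Const 5)) (Has (jISCe cd))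
  (Ifz (Eqb ct (Const 6)) (Eqb cd Zero) (Const 1))))))).
Lemma den_chkISC i ea n L c :
  den (chkISC c) [i; ea; n; L] = 0 <-> ISCok (den c [i; ea; n; L]) (fun t => hasN i L t = 0).
Proof.
  unfold chkISC, AddE. cbv zeta. dnorm. unfold ISCok. cbn [nth].
  destruct (cfst (den c _)) as [|[|[|[|[|[|[|ct]]]]]]]; cbn [Nat.eqb].
  all: rewrite ?if01, ?if10, ?b2n0, ?b2n1.
  all: bcases.
  all: rewrite ?Nat.add_0_l, ?Nat.eq_add_0.
  all: try (split; intros; intuition (try lia; try discriminate)).
Qed.

Definition chkISCL (gl : exp) : exp :=
  Ifz (Eqb gl Zero) Zero (AddE (Has (jISCe (Hd gl))) (Has (jISCLe (Tl gl)))).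
Lemma den_chkISCL i ea n L gl :
  den (chkISCL gl) [i; ea; n; L] = 0 <-> ISCLok (den gl [i; ea; n; L]) (fun t => hasN i L t = 0).
Proof.
  unfold chkISCL, AddE. dnorm. unfold ISCLok. cbn [nth].
  rewrite ?if01, ?if10, ?b2n0, ?b2n1. bcases.
  all: rewrite ?Nat.add_0_l, ?Nat.eq_add_0.
  all: try (split; intros; intuition (try lia; try discriminate)).
Qed.

Definition okE : exp :=
  let E := Lnth (Var 0) (Var 3) in let J := Fst E in let W := Snd E in
  let tg := Fst J in let D := Snd J in
  Ifz (Eqb tg (Const 1)) (chkEV (Fst D) (Fst (Snd D)) (Fst (Snd (Snd D))) (Snd (Snd (Snd D))) W)
  (Ifz (Eqb tg (Const 2)) (chkEVS (Fst D) (Fst (Snd D)) (Fst (Snd (Snd D))) (Snd (Snd (Snd D))))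
  (Ifz (Eqb tg (Const 3)) (chkMU (Fst D) (Fst (Snd D)) (Fst (Snd (Snd D))) (Snd (Snd (Snd D))) W)
  (Ifz (Eqb tg (Const 4)) (chkFACT (Fst D) (Fst (Snd D)) (Snd (Snd D)) W)
  (Ifz (Eqb tg (Const 5)) (chkISC D)
  (Ifz (Eqb tg (Const 6)) (chkISCL D) Zero))))).

Lemma den_okE i ea n L :
  den okE [i; ea; n; L] = 0 <-> okP ea n (lnth i L) (fun t => hasN i L t = 0).
Proof.
  unfold okE. cbv zeta.
  rewrite !den_Ifz, !den_Eqb, !den_Fst, !den_Lnth, !den_Const, den_Zero, !den_Var. cbn [nth].
  unfold okP. cbv zeta.
  destruct (cfst (cfst (lnth i L))) as [|[|[|[|[|[|[|tg]]]]]]]; cbn [Nat.eqb]; rewrite ?if01.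
  all: try reflexivity.
  all: try (split; auto; fail).
  - rewrite den_chkEV. dnorm. cbn [nth]. reflexivity.
  - rewrite den_chkEVS. dnorm. cbn [nth]. reflexivity.
  - rewrite den_chkMU. dnorm. cbn [nth]. reflexivity.
  - rewrite den_chkFACT. dnorm. cbn [nth]. reflexivity.
  - rewrite den_chkISC. dnorm. cbn [nth]. reflexivity.
  - rewrite den_chkISCL. dnorm. cbn [nth]. reflexivity.
Qed.

Opaque cfst csnd.

Lemma den_unwF k w : den unwF [k; w] = unw k w.
Proof. unfold unwF. rewrite unw_iter. cbn -[Fst]. apply nat_rec_ext. intros. rewrite den_Fst. reflexivity. Qed.

Definition evP := Eqb (Tb (Snd (Comp unwF [Var 0; Var 1])) Zero) Zero.
Definition tK := Fst (Var 0).
Definition tX := Fst (Snd (Var 0)).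
Definition tY := Fst (Snd (Snd (Var 0))).
Definition tL := Snd (Snd (Snd (Var 0))).
Definition topE : exp :=
  AddE (Eqb (Comp unwF [tK; Var 2]) (Pair (Pair tX tY) (Const 1)))
  (AddE (BAll evP tK [Var 2])
  (AddE (BAll okE tL [Var 1; Var 2; tL])
        (Comp hasF [tL; tL; jFACTe tK tX tY]))).

Lemma den_topE cert ea n :
  let K := cfst cert in let X := cfst (csnd cert) in let Y := cfst (csnd (csnd cert)) in
  let Lc := csnd (csnd (csnd cert)) in
  den topE [cert; ea; n] = 0 <->
  unw K n = cpair (cpair X Y) 1 /\ (forall j, j < K -> Nat.testbit (uu j n) 0 = false) /\
  (forall i, i < Lc -> okP ea n (lnth i Lc) (fun t => hasN i Lc t = 0)) /\
  hasN Lc Lc (jFACT K X Y) = 0.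
Proof.
  intros. unfold topE, AddE. rewrite !den_Add, !Nat.eq_add_0.
  rewrite den_Eqb, den_BAll, den_BAll, den_Comp. cbn [map].
  rewrite den_Comp. cbn [map]. rewrite den_unwF.
  unfold tK, tX, tY, tL. dnorm. cbn [nth]. fold K X Y Lc.
  fold (hasN Lc Lc (jFACT K X Y)).
  destruct (Nat.eqb_spec (unw K n) (cpair (cpair X Y) 1)).
  2: { split; [intros [H _]; discriminate| intros [H _]; congruence]. }
  assert (HE : forall j, j < K -> (den evP [j; n] = 0 <-> Nat.testbit (uu j n) 0 = false)).
  { intros j Hj. unfold evP. rewrite den_Eqb, den_Tb, den_Snd, den_Comp. cbn [map]. dnorm. cbn [nth].
    rewrite den_unwF. unfold uu. destruct (Nat.testbit _ _); simpl; split; congruence. }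
  split.
  - intros [_ [H1 [H2 H3]]]. split; auto. split; [|split; auto].
    + intros j Hj. apply HE; auto.
    + intros i Hi. apply den_okE. auto.
  - intros [_ [H1 [H2 H3]]]. split; auto. split; [|split; auto].
    + intros j Hj. apply HE; auto.
    + intros i Hi. apply den_okE. auto.
Qed.

Lemma lc_length l : length l <= lc l.
Proof. induction l; simpl; auto. pose proof (cpair_ge_r a (lc l)). lia. Qed.

Lemma least_witness (P : nat -> Prop) m : P m -> exists k, P k /\ forall j, j < k -> ~ P j.
Proof.
  induction m as [m IH] using (well_founded_induction lt_wf). intros Hm.
  destruct (classic (exists j, j < m /\ P j)) as [[j [Hj Pj]]|Hn].
  - apply (IH j Hj Pj).
  - exists m. split; auto. intros j Hj Pj. apply Hn; eauto.
Qed.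

Definition progE ea := CMu (compile (Comp topE [Var 0; Const ea; Var 1]) 2).

Lemma prog_f O ea k n : eval O (compile (Comp topE [Var 0; Const ea; Var 1]) 2) [k; n] (den topE [k; ea; n]).
Proof.
  pose proof (compile_ok O (Comp topE [Var 0; Const ea; Var 1]) [k; n]) as H.
  cbn [length] in H. rewrite den_Comp in H. cbn [map] in H. rewrite den_Const, !den_Var in H.
  cbn [nth] in H. exact H.
Qed.

Lemma eval_mu_inv O f v k : eval O (CMu f) v k -> eval O f (k :: v) 0.
Proof. intros H. inversion H. auto. Qed.

Lemma okP_zero ea n has : okP ea n 0 has.
Proof. unfold okP. cbv zeta. rewrite !cfst0. exact I. Qed.

Lemma Mem_ce a : partial_computable a -> ce (Mem a).
Proof.
  intros [ea Ha]. exists (encode (progE ea)). intros n. split.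
  - intros HM. apply Mem_char in HM as [k [x [y [H1 [H2 H3]]]]].
    destruct (C_FACT a ea n Ha k x y H3) as [L [V C]].
    set (cert := cpair k (cpair x (cpair y (lc L)))).
    assert (Htop : den topE [cert; ea; n] = 0).
    { apply den_topE. cbv zeta. unfold cert. repeat rewrite ?cfst_pair, ?csnd_pair.
      split; auto. split; auto. split.
      - intros i Hi. destruct (lt_dec i (length L)).
        + rewrite lnth_lc. eapply okP_mono; [|apply V; auto]. intros t [p [Hp Ht]].
          apply hasN_spec. exists p. split; auto. rewrite lnth_lc. auto.
        + rewrite lnth_lc, nth_overflow by lia. apply okP_zero.
      - apply hasN_spec. destruct C as [p [Hp Hc]]. exists p. split.
        + pose proof (lc_length L). lia.
        + rewrite lnth_lc. auto. }
    destruct (least_witness (fun k => den topE [k; ea; n] = 0) cert Htop) as [k0 [Hk0 Hmin]].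
    exists k0. exists (progE ea). split; [reflexivity|]. constructor.
    + pose proof (prog_f empty_oracle ea k0 n) as H. rewrite Hk0 in H. exact H.
    + intros j Hj. exists (den topE [j; ea; n]). split; [apply Hmin; auto| apply prog_f].
  - intros [y [C [HC HE]]]. apply encode_inj in HC. subst C. unfold progE in HE.
    apply eval_mu_inv in HE.
    pose proof (eval_det _ _ _ _ HE _ (prog_f empty_oracle ea y n)) as Hd.
    symmetry in Hd. apply den_topE in Hd. cbv zeta in Hd. destruct Hd as [H1 [H2 [H3 H4]]].
    destruct (lc_surj (csnd (csnd (csnd y)))) as [L HL].
    rewrite <- HL in H3, H4. clear HE.
    assert (HV : forall i, okP ea n (nth i L 0) (hasP L i)).
    { intros i. destruct (lt_dec i (length L)).
      - assert (Hi : i < lc L) by (eapply Nat.lt_le_trans; [exact l | apply lc_length]).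
        specialize (H3 i Hi). rewrite lnth_lc in H3.
        assert (HH : forall t, hasN i (lc L) t = 0 -> hasP L i t).
        { intros t Ht. apply hasN_spec in Ht as [p [Hp Ht]].
          exists p. split; [exact Hp|]. rewrite lnth_lc in Ht. exact Ht. }
        exact (okP_mono _ _ _ _ _ HH H3).
      - rewrite nth_overflow by (apply Nat.nlt_ge; exact n0). apply okP_zero. }
    pose proof (soundness a ea n L Ha HV) as HS.
    apply hasN_spec in H4 as [p [Hp Hc]]. rewrite lnth_lc in Hc.
    pose proof (HS p) as HSp. rewrite Hc in HSp.
    apply Mem_char. exists (cfst y), (cfst (csnd y)), (cfst (csnd (csnd y))). split; auto. split; auto.
    apply (proj1 (proj2 (proj2 (proj2 HSp)))). reflexivity.
Qed.

Definition hE (a : Beff) : Ecarrier := exist _ (Mem (proj1_sig a)) (Mem_ce _ (proj2_sig a)).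

Lemma emb3 : embedding Beff_app E_app hE.
Proof.
  split.
  - intros [a Ha] [a' Ha'] H. apply (f_equal (@proj1_sig _ _)) in H. unfold hE in H. cbn [proj1_sig] in H.
    assert (a = a').
    { apply functional_extensionality. intro x.
      destruct (a x) as [y|] eqn:E1; destruct (a' x) as [y'|] eqn:E2.
      - assert (Mem a (cpair (cpair x y) 1)) by (apply Mem_base_iff; auto).
        rewrite H in H0. apply Mem_base_iff in H0. congruence.
      - assert (Mem a (cpair (cpair x y) 1)) by (apply Mem_base_iff; auto).
        rewrite H in H0. apply Mem_base_iff in H0. congruence.
      - assert (Mem a' (cpair (cpair x y') 1)) by (apply Mem_base_iff; auto).
        rewrite <- H in H0. apply Mem_base_iff in H0. congruence.
      - auto. }
    subst a'. f_equal. apply proof_irrelevance.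
  - intros [a Ha] [b Hb] [c Hc] Happ. unfold Beff_app in Happ. cbn [proj1_sig] in Happ.
    unfold E_app, hE. cbn [proj1_sig].
    assert (c = AppF a b).
    { apply functional_extensionality. intro z.
      destruct (c z) as [y|] eqn:E1; destruct (AppF a b z) as [y'|] eqn:E2.
      - apply Happ in E1. apply AppF_spec in E2. f_equal. eapply Bapp_det; eauto.
      - apply Happ in E1. apply AppF_spec in E1. congruence.
      - apply AppF_spec in E2. apply Happ in E2. congruence.
      - auto. }
    subst c. apply E_app_Mem.
Qed.

Theorem corollary7p5 :
  exists (f : K1 -> K2eff) (g : K2eff -> Beff) (h : Beff -> Ecarrier),
    embedding K1_app K2eff_app f /\
    embedding K2eff_app Beff_app g /\
    embedding Beff_app E_app h.
Proof.
  exists fE, gE, hE. split; [exact emb1|split; [exact emb2|exact emb3]].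
Qed.
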